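(* Let $C^*>0$ and $C_1,C_2>0$. Let $\boldsymbol m_e\in[C(\bar\Omega)]^3$ satisfy $\|\boldsymbol m_e\|_{W^{1,\infty}}\le C^*$ and $|\boldsymbol m_e|=1$ pointwise, and let $\underline{\boldsymbol m}_h=\mathcal P_h\boldsymbol m_e$. For a grid function $\tilde{\boldsymbol m}_h\in\boldsymbol X$ set $\boldsymbol m_h=\tilde{\boldsymbol m}_h/|\tilde{\boldsymbol m}_h|$ pointwise, $\boldsymbol e_h=\underline{\boldsymbol m}_h-\boldsymbol m_h$, $\tilde{\boldsymbol e}_h=\underline{\boldsymbol m}_h-\tilde{\boldsymbol m}_h$. Suppose $$\|\tilde{\boldsymbol e}_h\|_2\le2k^{15/8},\qquad\|\nabla_h\tilde{\boldsymbol e}_h\|_2\le\tfrac12k^{11/8},$$ where $k>0$ and $C_1h\le k\le C_2h$. Then, for $k$ and $h$ sufficiently small, $\tilde{\boldsymbol m}_h$ does not vanish, and $$\|\tilde{\boldsymbol e}_h\|_2^2\ge(1-k^{5/4})\|\boldsymbol e_h\|_2^2+(1-k^{1/4})\|\tilde{\boldsymbol e}_h-\boldsymbol e_h\|_2^2,$$ and for every $\delta>0$ there is a constant $\mathcal C_\delta$ (independent of $h,k$) such that $$\|\nabla_h\boldsymbol e_h\|_2^2\le(1+\delta)\|\nabla_h\tilde{\boldsymbol e}_h\|_2^2+\mathcal C_\delta\|\tilde{\boldsymbol e}_h\|_2^2.$$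
   Context: $\Omega=[0,1]^3$, $h=1/N$, cell-centered grid points $((i-\tfrac12)h,(j-\tfrac12)h,(\ell-\tfrac12)h)$, $0\le i,j,\ell\le N+1$, interior points $\Omega_h^0$ those with $1\le i,j,\ell\le N$. $\boldsymbol X$ is the space of $\mathbb R^3$-valued grid functions satisfying the discrete Neumann condition $\boldsymbol m_{0,j,\ell}=\boldsymbol m_{1,j,\ell}$, $\boldsymbol m_{N+1,j,\ell}=\boldsymbol m_{N,j,\ell}$ (and analogously in $j,\ell$). $\mathcal P_h$ is pointwise interpolation at interior points, extended to ghost points by the Neumann condition. Forward differences $D_xf_{i,j,\ell}=(f_{i+1,j,\ell}-f_{i,j,\ell})/h$ (similarly $D_y,D_z$); $\nabla_h$ collects all forward differences. $\|\boldsymbol f\|_2^2=h^3\sum_{\Omega_h^0}|\boldsymbol f|^2$ and $\|\nabla_h\boldsymbol f\|_2$ is the analogous discrete norm of the difference quotients. *)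

(* Defs.v *)
From HB Require Import structures.
From mathcomp Require Import all_boot all_order all_algebra.
From mathcomp Require Import all_classical all_reals.
From mathcomp Require Import exp.
Set Implicit Arguments. Unset Strict Implicit. Unset Printing Implicit Defensive.
Import Order.TTheory GRing.Theory Num.Theory.
Local Open Scope ring_scope.

Section Grid.
Variable R : realType.

Definition vnorm2 (v : 'rV[R]_3) : R := \sum_(c < 3) v 0 c ^+ 2.
Definition vnorm (v : 'rV[R]_3) : R := Num.sqrt (vnorm2 v).

Definition dist3 (x1 x2 x3 y1 y2 y3 : R) : R :=
  Num.sqrt ((x1 - y1) ^+ 2 + (x2 - y2) ^+ 2 + (x3 - y3) ^+ 2).
Definition in_cube (x1 x2 x3 : R) : Prop :=
  [/\ 0 <= x1 <= 1, 0 <= x2 <= 1 & 0 <= x3 <= 1].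

Definition hN (N : nat) : R := (N%:R)^-1.

(* grid functions: values at indices (i,j,l), 0 <= i,j,l <= N+1 *)
Definition gridfun := nat -> nat -> nat -> 'rV[R]_3.

(* the space X: discrete Neumann condition in each direction *)
Definition inX (N : nat) (f : gridfun) : Prop :=
  (forall j l, (j <= N.+1)%N -> (l <= N.+1)%N ->
     f 0%N j l = f 1%N j l /\ f N.+1 j l = f N j l) /\
  (forall i l, (i <= N.+1)%N -> (l <= N.+1)%N ->
     f i 0%N l = f i 1%N l /\ f i N.+1 l = f i N l) /\
  (forall i j, (i <= N.+1)%N -> (j <= N.+1)%N ->
     f i j 0%N = f i j 1%N /\ f i j N.+1 = f i j N).

(* cell-centred coordinate of index i *)
Definition coord (N i : nat) : R := (i%:R - 2^-1) * hN N.

(* index of the interior point used by the Neumann extension *)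
Definition clampN (N i : nat) : nat :=
  if i == 0%N then 1%N else if (N < i)%N then N else i.

(* P_h : pointwise interpolation at interior points, extended by Neumann *)
Definition Ph (N : nat) (m : R -> R -> R -> 'rV[R]_3) : gridfun :=
  fun i j l => m (coord N (clampN N i)) (coord N (clampN N j))
                 (coord N (clampN N l)).

Definition normalize (f : gridfun) : gridfun :=
  fun i j l => (vnorm (f i j l))^-1 *: f i j l.

Definition Dx (N : nat) (f : gridfun) : gridfun :=
  fun i j l => (hN N)^-1 *: (f i.+1 j l - f i j l).
Definition Dy (N : nat) (f : gridfun) : gridfun :=
  fun i j l => (hN N)^-1 *: (f i j.+1 l - f i j l).
Definition Dz (N : nat) (f : gridfun) : gridfun :=
  fun i j l => (hN N)^-1 *: (f i j l.+1 - f i j l).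

Definition gsum (N : nat) (g : nat -> nat -> nat -> R) : R :=
  hN N ^+ 3 * \sum_(1 <= i < N.+1) \sum_(1 <= j < N.+1) \sum_(1 <= l < N.+1)
    g i j l.

Definition l2sq (N : nat) (f : gridfun) : R := gsum N (fun i j l => vnorm2 (f i j l)).
Definition gradsq (N : nat) (f : gridfun) : R :=
  gsum N (fun i j l => vnorm2 (Dx N f i j l) + vnorm2 (Dy N f i j l)
                       + vnorm2 (Dz N f i j l)).
Definition l2norm (N : nat) (f : gridfun) : R := Num.sqrt (l2sq N f).
Definition gradnorm (N : nat) (f : gridfun) : R := Num.sqrt (gradsq N f).

Definition gsub (f g : gridfun) : gridfun := fun i j l => f i j l - g i j l.

(* ||m||_{W^{1,oo}} <= C on the closed cube: sup-norm bound and
   Lipschitz bound (= W^{1,oo} seminorm on the convex domain). *)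
Definition W1inf_bounded (C : R) (m : R -> R -> R -> 'rV[R]_3) : Prop :=
  (forall x1 x2 x3, in_cube x1 x2 x3 -> vnorm (m x1 x2 x3) <= C) /\
  (forall x1 x2 x3 y1 y2 y3, in_cube x1 x2 x3 -> in_cube y1 y2 y3 ->
     vnorm (m x1 x2 x3 - m y1 y2 y3) <= C * dist3 x1 x2 x3 y1 y2 y3).

End Grid.

(* Main.v *)
Require Import Defs.
From HB Require Import structures.
From mathcomp Require Import all_boot all_order all_algebra.
From mathcomp Require Import all_classical all_reals.
From mathcomp Require Import exp.
From mathcomp Require Import ring lra zify.
Import Order.TTheory GRing.Theory Num.Theory.

Module A1.
Set Implicit Arguments. Unset Strict Implicit. Unset Printing Implicit Defensive.
Local Open Scope ring_scope.

Section Vec.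
Variable R : realType.
Implicit Types u v w : 'rV[R]_3.

Lemma sum3 (F : 'I_3 -> R) : \sum_(c < 3) F c = F 0 + F 1 + F 2.
Proof. rewrite !big_ord_recr big_ord0 /= add0r. congr (_ + _ + _); by apply: congr1; apply: val_inj. Qed.

Definition dot u v : R := \sum_(c < 3) u 0 c * v 0 c.

Lemma vnorm2E v : vnorm2 v = v 0 0 ^+ 2 + v 0 1 ^+ 2 + v 0 2 ^+ 2.
Proof. by rewrite /vnorm2 sum3. Qed.
Lemma dotE u v : dot u v = u 0 0 * v 0 0 + u 0 1 * v 0 1 + u 0 2 * v 0 2.
Proof. by rewrite /dot sum3. Qed.

Lemma vnorm2_ge0 v : 0 <= vnorm2 v.
Proof. rewrite vnorm2E; set a := v 0 0; set b := v 0 1; set c := v 0 2.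
have := sqr_ge0 a; have := sqr_ge0 b; have := sqr_ge0 c; lra. Qed.

Lemma vnorm_ge0 v : 0 <= vnorm v.
Proof. exact: sqrtr_ge0. Qed.

Lemma vnorm_sq v : vnorm v ^+ 2 = vnorm2 v.
Proof. by rewrite /vnorm sqr_sqrtr // vnorm2_ge0. Qed.

Lemma vnorm2_add u v : vnorm2 (u + v) = vnorm2 u + 2 * dot u v + vnorm2 v.
Proof. rewrite !vnorm2E dotE !mxE; ring. Qed.
Lemma vnorm2_sub u v : vnorm2 (u - v) = vnorm2 u - 2 * dot u v + vnorm2 v.
Proof. rewrite !vnorm2E dotE !mxE; ring. Qed.
Lemma vnorm2_scale (c : R) v : vnorm2 (c *: v) = c ^+ 2 * vnorm2 v.
Proof. rewrite !vnorm2E !mxE; ring. Qed.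
Lemma vnorm2N v : vnorm2 (- v) = vnorm2 v.
Proof. rewrite !vnorm2E !mxE; ring. Qed.
Lemma vnorm2_subC u v : vnorm2 (u - v) = vnorm2 (v - u).
Proof. by rewrite -vnorm2N opprB. Qed.
Lemma dot_scalel (c : R) u v : dot (c *: u) v = c * dot u v.
Proof. rewrite !dotE !mxE; ring. Qed.
Lemma dot_scaler (c : R) u v : dot u (c *: v) = c * dot u v.
Proof. rewrite !dotE !mxE; ring. Qed.
Lemma dotC u v : dot u v = dot v u.
Proof. rewrite !dotE; ring. Qed.
Lemma dotDl u v w : dot (u + v) w = dot u w + dot v w.
Proof. rewrite !dotE !mxE; ring. Qed.
Lemma dotBl u v w : dot (u - v) w = dot u w - dot v w.
Proof. rewrite !dotE !mxE; ring. Qed.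
Lemma dotvv v : dot v v = vnorm2 v.
Proof. rewrite dotE vnorm2E; ring. Qed.

Lemma CS2 u v : dot u v ^+ 2 <= vnorm2 u * vnorm2 v.
Proof.
rewrite dotE !vnorm2E.
set a := u 0 0; set b := u 0 1; set c := u 0 2; set d := v 0 0; set e := v 0 1; set f := v 0 2.
have := sqr_ge0 (a*e - b*d); have := sqr_ge0 (a*f - c*d); have := sqr_ge0 (b*f - c*e).
nra.
Qed.

Lemma CS u v : dot u v <= vnorm u * vnorm v.
Proof.
have h1 : `|dot u v| <= vnorm u * vnorm v.
  rewrite -(@ler_pXn2r _ 2%N) ?nnegrE ?mulr_ge0 ?vnorm_ge0 //.
  by rewrite exprMn !vnorm_sq real_normK ?num_real // CS2.
exact: le_trans (ler_norm _) h1.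
Qed.

Lemma vnorm_tri u v : vnorm (u + v) <= vnorm u + vnorm v.
Proof.
rewrite -(@ler_pXn2r _ 2%N) ?nnegrE ?addr_ge0 ?vnorm_ge0 //.
rewrite vnorm_sq vnorm2_add sqrrD !vnorm_sq.
have := CS u v; lra.
Qed.

Lemma vnorm_scale (c : R) v : vnorm (c *: v) = `|c| * vnorm v.
Proof. by rewrite /vnorm vnorm2_scale sqrtrM ?sqr_ge0 // sqrtr_sqr. Qed.

Lemma vnorm_subC u v : vnorm (u - v) = vnorm (v - u).
Proof. by rewrite /vnorm vnorm2_subC. Qed.

Lemma vnorm_rev u v : `|vnorm u - vnorm v| <= vnorm (u - v).
Proof.
have h1 : vnorm u <= vnorm v + vnorm (u - v).
  by have := vnorm_tri v (u - v); rewrite addrC subrK addrC.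
have h2 : vnorm v <= vnorm u + vnorm (u - v).
  by have := vnorm_tri u (v - u); rewrite addrC subrK vnorm_subC addrC.
rewrite ler_norml; apply/andP; split; lra.
Qed.

Lemma vnorm0 v : vnorm v = 0 -> v = 0.
Proof.
move=> h. have : vnorm2 v = 0 by rewrite -vnorm_sq h expr0n.
rewrite vnorm2E => e.
have h0 : v 0 0 = 0 by apply/eqP; rewrite -sqrf_eq0; apply/eqP; have := sqr_ge0 (v 0 0); have := sqr_ge0 (v 0 1); have := sqr_ge0 (v 0 2); lra.
have h1 : v 0 1 = 0 by apply/eqP; rewrite -sqrf_eq0; apply/eqP; have := sqr_ge0 (v 0 0); have := sqr_ge0 (v 0 1); have := sqr_ge0 (v 0 2); lra.
have h2 : v 0 2 = 0 by apply/eqP; rewrite -sqrf_eq0; apply/eqP; have := sqr_ge0 (v 0 0); have := sqr_ge0 (v 0 1); have := sqr_ge0 (v 0 2); lra.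
apply/rowP => c; rewrite mxE; case: c => [[|[|[|c]]] hc] //.
- by rewrite -h0; congr (v 0 _); apply: val_inj.
- by rewrite -h1; congr (v 0 _); apply: val_inj.
- by rewrite -h2; congr (v 0 _); apply: val_inj.
Qed.

Lemma vnorm2_young u v (eps : R) : 0 < eps ->
  vnorm2 (u + v) <= (1 + eps) * vnorm2 u + (1 + eps^-1) * vnorm2 v.
Proof.
move=> he. rewrite vnorm2_add.
have := CS u v. rewrite -!vnorm_sq => hc.
set a := vnorm u; set b := vnorm v.
have : 0 <= (eps * a - b) ^+ 2 by apply: sqr_ge0.
have hi : eps * eps^-1 = 1 by rewrite mulfV ?gt_eqF.
have hi0 : 0 < eps^-1 by rewrite invr_gt0.
move=> hsq.
have : 2 * a * b <= eps * a ^+ 2 + eps^-1 * b ^+ 2.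
  have e1 : eps * a ^+ 2 + eps^-1 * b ^+ 2 - 2 * a * b = eps^-1 * (eps * a - b) ^+ 2.
    by field; rewrite gt_eqF.
  have : 0 <= eps^-1 * (eps * a - b) ^+ 2 by apply: mulr_ge0; [lra|apply: sqr_ge0].
  lra.
move=> h2.
have -> : (1 + eps) * a ^+ 2 + (1 + eps^-1) * b ^+ 2 = a ^+ 2 + b ^+ 2 + (eps * a ^+ 2 + eps^-1 * b ^+ 2) by ring.
have : 2 * dot u v <= 2 * a * b by rewrite -mulrA ler_pM2l.
lra.
Qed.

End Vec.

End A1.
Import A1.

Module A2.
Set Implicit Arguments. Unset Strict Implicit. Unset Printing Implicit Defensive.
Local Open Scope ring_scope.

Section Nrm.
Variable R : realType.
Implicit Types u v w a b t x y : 'rV[R]_3.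

Definition nrm v : 'rV[R]_3 := (vnorm v)^-1 *: v.

Lemma vnorm_le_sqrt v (c : R) : 0 <= c -> vnorm2 v <= c ^+ 2 -> vnorm v <= c.
Proof.
move=> c0 h. rewrite -(@ler_pXn2r _ 2%N) ?nnegrE ?vnorm_ge0 //.
by rewrite vnorm_sq.
Qed.

Lemma vnorm2_le_sq v (c : R) : vnorm v <= c -> vnorm2 v <= c ^+ 2.
Proof.
move=> h. rewrite -vnorm_sq. rewrite -[_ ^+ 2]/(_ * _) -[c ^+ 2]/(c * c).
apply: ler_pM; rewrite ?vnorm_ge0 //.
Qed.

Lemma vnormN v : vnorm (- v) = vnorm v.
Proof. by rewrite /vnorm vnorm2N. Qed.

Lemma unit_vnorm a : vnorm2 a = 1 -> vnorm a = 1.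
Proof. by move=> h; rewrite /vnorm h sqrtr1. Qed.

Lemma N1 x y : 0 < vnorm x -> 0 < vnorm y ->
  vnorm2 (nrm x - nrm y) * (vnorm x * vnorm y) <= vnorm2 (x - y).
Proof.
move=> hx hy. rewrite /nrm vnorm2_sub !vnorm2_scale dot_scalel dot_scaler.
rewrite vnorm2_sub -!vnorm_sq.
set r := vnorm x; set s := vnorm y; set d := dot x y.
have -> : ((r^-1) ^+ 2 * r ^+ 2 - 2 * (r^-1 * (s^-1 * d)) + (s^-1) ^+ 2 * s ^+ 2) * (r * s)
  = 2 * r * s - 2 * d by field; apply/andP; split; rewrite gt_eqF.
have := sqr_ge0 (r - s). lra.
Qed.

Lemma N3 x y (eta : R) : 0 < 1 - eta -> 1 - eta <= vnorm x -> 1 - eta <= vnorm y ->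
  vnorm2 (nrm x - nrm y) * (1 - eta) ^+ 2 <= vnorm2 (x - y).
Proof.
move=> he hx hy.
have x0 : 0 < vnorm x by exact: lt_le_trans he hx.
have y0 : 0 < vnorm y by exact: lt_le_trans he hy.
apply: le_trans (N1 x0 y0).
apply: ler_wpM2l; first exact: vnorm2_ge0.
rewrite expr2; apply: ler_pM => //; lra.
Qed.

Lemma N2 a a' t : vnorm2 a = 1 -> vnorm2 a' = 1 ->
  2^-1 <= vnorm (a - t) -> 2^-1 <= vnorm (a' - t) ->
  vnorm ((a - nrm (a - t)) - (a' - nrm (a' - t))) <= 6 * vnorm t * vnorm (a - a').
Proof.
move=> ha ha' hx hy.
set x := a - t; set y := a' - t; set w := a - a'.
set r := vnorm x; set s := vnorm y.
have r0 : 0 < r by apply: lt_le_trans hx; rewrite invr_gt0.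
have s0 : 0 < s by apply: lt_le_trans hy; rewrite invr_gt0.
have eE : (a - nrm x) - (a' - nrm y) = (1 - r^-1) *: w - (r^-1 - s^-1) *: y.
  have xE : x = y + w by rewrite /x /y /w; apply/rowP => c; rewrite !mxE; ring.
  rewrite /nrm -/r -/s xE /w; apply/rowP => c; rewrite !mxE; ring.
rewrite eE.
have hr1 : `|r - 1| <= vnorm t.
  have := vnorm_rev x a. rewrite (unit_vnorm ha) -/r.
  have -> : x - a = - t by rewrite /x; apply/rowP => c; rewrite !mxE; ring.
  by rewrite /vnorm vnorm2N.
have hsr : `|s - r| <= 2 * vnorm w * vnorm t.
  have e2 : s ^+ 2 - r ^+ 2 = 2 * dot w t.
    rewrite /s /r !vnorm_sq /x /y !vnorm2_sub ha ha' /w dotBl; ring.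
  have hd : `|dot w t| <= vnorm w * vnorm t.
    rewrite ler_norml; apply/andP; split; last exact: CS.
    have := CS (- w) t. have -> : dot (- w) t = - dot w t by rewrite !dotE !mxE; ring.
    by rewrite /vnorm vnorm2N; lra.
  have h2i : (2:R)^-1 + 2^-1 = 1 by field.
  have hx' : 2^-1 <= r := hx. have hy' : 2^-1 <= s := hy.
  have hsum : 1 <= s + r by lra.
  have : `|s - r| * (s + r) = 2 * `|dot w t|.
    rewrite -[s + r]ger0_norm ?addr_ge0 ?ltW // -normrM.
    have -> : (s - r) * (s + r) = s ^+ 2 - r ^+ 2 by ring.
    by rewrite e2 normrM gtr0_norm.
  have : 0 <= `|s - r| by [].
  nra.
apply: le_trans (vnorm_tri _ _) _.
rewrite vnormN !vnorm_scale.
have e3 : `|1 - r^-1| = `|r - 1| / r.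
  have -> : 1 - r^-1 = (r - 1) / r by field; rewrite gt_eqF.
  by rewrite normrM normfV (gtr0_norm r0).
have e4 : `|r^-1 - s^-1| * s = `|s - r| / r.
  have -> : r^-1 - s^-1 = (s - r) / (r * s) by field; apply/andP; split; rewrite gt_eqF.
  rewrite normrM normfV (gtr0_norm (mulr_gt0 r0 s0)). by field; apply/andP; split; rewrite gt_eqF.
rewrite -/s e3 mulrAC e4.
have ri : r^-1 <= 2.
  have hi : r^-1 * r = 1 by rewrite mulVf ?gt_eqF.
  have h2i : (2:R)^-1 + 2^-1 = 1 by field.
  have hx' : 2^-1 <= r := hx.
  have : 1 <= 2 * r by lra.
  have : 0 <= r^-1 by rewrite invr_ge0 ltW.
  nra.
have hw := vnorm_ge0 w. have ht := vnorm_ge0 t.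
have ri0 : 0 <= r^-1 by rewrite invr_ge0 ltW.
have h1 : `|r - 1| / r * vnorm w <= 2 * vnorm t * vnorm w.
  apply: ler_wpM2r => //. rewrite [2 * _]mulrC. by apply: ler_pM.
have h2 : `|s - r| / r <= 4 * vnorm w * vnorm t.
  have : `|s - r| / r <= (2 * vnorm w * vnorm t) * 2 by apply: ler_pM.
  lra.
have : 2 * vnorm t * vnorm w = 2 * vnorm w * vnorm t by ring.
lra.
Qed.

End Nrm.

End A2.
Import A2.

Module A3.
Set Implicit Arguments. Unset Strict Implicit. Unset Printing Implicit Defensive.
Local Open Scope ring_scope.

Section Pt.
Variable R : realType.
Implicit Types u v w a b t x y : 'rV[R]_3.

Lemma sqrt_quarter : Num.sqrt (4^-1 : R) = 2^-1.
Proof.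
have -> : (4^-1 : R) = (2^-1) ^+ 2 by field.
by rewrite sqrtr_sqr ger0_norm // invr_ge0.
Qed.

Lemma P1 a b : vnorm2 a = 1 -> vnorm2 (a - b) <= 4^-1 -> 2^-1 <= vnorm b.
Proof.
move=> ha hb.
have h1 : vnorm (a - b) <= 2^-1.
  apply: vnorm_le_sqrt; first by rewrite invr_ge0.
  by have -> : ((2:R)^-1) ^+ 2 = 4^-1 by field.
have := vnorm_rev a b. rewrite (unit_vnorm ha) => h2.
have h3 : 1 - vnorm b <= 2^-1.
  by apply: le_trans (le_trans (ler_norm _) h2) h1.
have : (2:R)^-1 + 2^-1 = 1 by field.
lra.
Qed.

Lemma P2 a b (M al be : R) : vnorm2 a = 1 -> vnorm2 (a - b) <= M -> M <= 4^-1 ->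
  2 * M <= al * be -> 0 <= al -> 0 <= be ->
  (1 - al) * vnorm2 (a - nrm b) + (1 - be) * vnorm2 ((a - b) - (a - nrm b))
   <= vnorm2 (a - b).
Proof.
move=> ha hab hM hab2 hal hbe.
have hr : 2^-1 <= vnorm b by apply: (P1 ha); exact: le_trans hab hM.
set r := vnorm b in hr.
have r0 : 0 < r by apply: lt_le_trans hr; rewrite invr_gt0.
have e1 : vnorm2 ((a - b) - (a - nrm b)) = (1 - r) ^+ 2.
  have -> : (a - b) - (a - nrm b) = (r^-1 - 1) *: b.
    by rewrite /nrm -/r; apply/rowP => c; rewrite !mxE; ring.
  rewrite vnorm2_scale -vnorm_sq -/r. by field; rewrite gt_eqF.
set E := vnorm2 (a - nrm b).
have e2 : vnorm2 (a - b) = (1 - r) ^+ 2 + r * E.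
  rewrite /E /nrm -/r !vnorm2_sub vnorm2_scale dot_scaler ha -vnorm_sq -/r.
  by field; rewrite gt_eqF.
rewrite e1 e2.
have hE : 0 <= E by apply: vnorm2_ge0.
have h2i : (2:R)^-1 + 2^-1 = 1 by field.
have hrE : r * E <= M.
  have := sqr_ge0 (1 - r). rewrite e2 in hab. lra.
have hE2 : E <= 2 * M.
  have : 2^-1 * E <= r * E by apply: ler_wpM2r.
  have : 2 * (2^-1 * E) = E by field.
  lra.
set d := 1 - r.
have goal_eq : d ^+ 2 + r * E - ((1 - al) * E + (1 - be) * d ^+ 2) = (al - d) * E + be * d ^+ 2.
  rewrite /d; ring.
suff : 0 <= (al - d) * E + be * d ^+ 2 by lra.
case: (lerP d al) => hd.
  apply: addr_ge0; [apply: mulr_ge0; lra | apply: mulr_ge0 => //; apply: sqr_ge0].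
have hd0 : 0 <= d by lra.
have k1 : (d - al) * E <= d * (al * be).
  apply: ler_pM; lra.
have k2 : d * (al * be) <= be * d ^+ 2.
  have : d * (al * be) = be * (d * al) by ring.
  have : be * d ^+ 2 = be * (d * d) by ring.
  move=> -> ->. apply: ler_wpM2l => //. apply: ler_wpM2l => //; lra.
have : (al - d) * E = - ((d - al) * E) by ring.
lra.
Qed.

Lemma P3 a a' t t' (eta eps : R) : vnorm2 a = 1 -> vnorm2 a' = 1 ->
  0 <= eta -> eta <= 2^-1 -> vnorm2 t <= eta ^+ 2 -> vnorm2 t' <= eta ^+ 2 -> 0 < eps ->
  vnorm2 ((a' - nrm (a' - t')) - (a - nrm (a - t)))
  <= (1 + eps) / (1 - eta) ^+ 2 * vnorm2 (t' - t)
     + (1 + eps^-1) * 36 * vnorm2 t * vnorm2 (a' - a).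
Proof.
move=> ha ha' he0 he1 ht ht' heps.
have h2i : (2:R)^-1 + 2^-1 = 1 by field.
have e1 : 0 < 1 - eta by lra.
have vt : vnorm t <= eta by apply: vnorm_le_sqrt.
have vt' : vnorm t' <= eta by apply: vnorm_le_sqrt.
have low : forall c s, vnorm2 c = 1 -> vnorm s <= eta -> 1 - eta <= vnorm (c - s).
  move=> c s hc hs. have := vnorm_rev c (c - s).
  rewrite (unit_vnorm hc).
  have -> : c - (c - s) = s by apply/rowP => i; rewrite !mxE; ring.
  move=> h. have := le_trans (ler_norm _) h. lra.
have -> : (a' - nrm (a' - t')) - (a - nrm (a - t)) =
   (nrm (a' - t) - nrm (a' - t')) + ((a' - nrm (a' - t)) - (a - nrm (a - t))).
  by apply/rowP => i; rewrite !mxE; ring.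
apply: le_trans (vnorm2_young _ _ heps) _.
apply: lerD.
  rewrite -mulrA [_^-1 * _]mulrC; apply: ler_wpM2l; first lra.
  have h := N3 e1 (low _ _ ha' vt) (low _ _ ha' vt').
  have ee : a' - t - (a' - t') = t' - t by apply/rowP => i; rewrite !mxE; ring.
  rewrite ee in h.
  have ep : 0 < (1 - eta) ^+ 2 by apply: exprn_gt0.
  rewrite ler_pdivlMr //.
have hx : 2^-1 <= vnorm (a' - t) by apply: le_trans (low _ _ ha' vt); lra.
have hy : 2^-1 <= vnorm (a - t) by apply: le_trans (low _ _ ha vt); lra.
have h := N2 ha' ha hx hy.
rewrite -mulrA -mulrA. apply: ler_wpM2l.
  by apply: addr_ge0 => //; rewrite invr_ge0 ltW.
have -> : 36 * (vnorm2 t * vnorm2 (a' - a)) = (6 * vnorm t * vnorm (a' - a)) ^+ 2.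
  by rewrite !exprMn !vnorm_sq; ring.
by apply: vnorm2_le_sq.
Qed.

End Pt.

End A3.
Import A3.

Module A4.
Set Implicit Arguments. Unset Strict Implicit. Unset Printing Implicit Defensive.
Local Open Scope ring_scope.

Section Sums.
Variable R : realType.
Variable N : nat.

Definition S1 (f : nat -> R) := \sum_(1 <= i < N.+1) f i.
Definition S3 (g : nat -> nat -> nat -> R) :=
  \sum_(1 <= i < N.+1) \sum_(1 <= j < N.+1) \sum_(1 <= l < N.+1) g i j l.

Definition inr (i : nat) := (1 <= i <= N)%N.

Lemma inrP i : (1 <= i < N.+1)%N = inr i.
Proof. by rewrite /inr ltnS. Qed.

Lemma S1_le f g : (forall i, inr i -> f i <= g i) -> S1 f <= S1 g.
Proof. move=> h; apply: ler_sum_nat => i hi; apply: h; by rewrite -inrP. Qed.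

Lemma S3_le f g : (forall i j l, inr i -> inr j -> inr l -> f i j l <= g i j l) -> S3 f <= S3 g.
Proof.
move=> h; apply: ler_sum_nat => i hi; apply: ler_sum_nat => j hj; apply: ler_sum_nat => l hl.
by apply: h; rewrite -inrP.
Qed.

Lemma S1_ge0 f : (forall i, inr i -> 0 <= f i) -> 0 <= S1 f.
Proof. move=> h. have := S1_le (f := fun _ => 0) h. by rewrite /S1 big1. Qed.

Lemma S3_ge0 f : (forall i j l, inr i -> inr j -> inr l -> 0 <= f i j l) -> 0 <= S3 f.
Proof. move=> h. have := S3_le (f := fun _ _ _ => 0) h. by rewrite /S3 big1 // => i _; rewrite big1 // => j _; rewrite big1. Qed.

Lemma S1D f g : S1 (fun i => f i + g i) = S1 f + S1 g.
Proof. by rewrite /S1 big_split. Qed.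
Lemma S1Z c f : S1 (fun i => c * f i) = c * S1 f.
Proof. by rewrite /S1 mulr_sumr. Qed.
Lemma S3D f g : S3 (fun i j l => f i j l + g i j l) = S3 f + S3 g.
Proof.
rewrite /S3 -big_split; apply: eq_bigr => i _; rewrite -big_split; apply: eq_bigr => j _.
by rewrite -big_split.
Qed.
Lemma S3Z c f : S3 (fun i j l => c * f i j l) = c * S3 f.
Proof.
rewrite /S3 mulr_sumr; apply: eq_bigr => i _; rewrite mulr_sumr; apply: eq_bigr => j _.
by rewrite mulr_sumr.
Qed.
Lemma S3_ext f g : (forall i j l, inr i -> inr j -> inr l -> f i j l = g i j l) -> S3 f = S3 g.
Proof.
move=> h. apply/eqP; rewrite eq_le; apply/andP; split; apply: S3_le => i j l hi hj hl; rewrite h //.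
Qed.
Lemma S1_ext f g : (forall i, inr i -> f i = g i) -> S1 f = S1 g.
Proof.
move=> h. apply/eqP; rewrite eq_le; apply/andP; split; apply: S1_le => i hi; rewrite h //.
Qed.

Lemma S1_single f i : (forall m, inr m -> 0 <= f m) -> inr i -> f i <= S1 f.
Proof.
move=> h hi. rewrite /S1 (bigD1_seq i) /=; last by rewrite /index_iota iota_uniq.
  rewrite lerDl big_seq_cond. apply: sumr_ge0 => m /andP[hm _]; apply h.
  by rewrite -inrP -mem_index_iota.
by rewrite mem_index_iota inrP.
Qed.

Lemma S3E g : S3 g = S1 (fun i => S1 (fun j => S1 (fun l => g i j l))).
Proof. by []. Qed.

Lemma S3_single g i j l : (forall i j l, inr i -> inr j -> inr l -> 0 <= g i j l) ->
  inr i -> inr j -> inr l -> g i j l <= S3 g.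
Proof.
move=> h hi hj hl. rewrite S3E.
apply: le_trans (S1_single _ hi); last first.
  by move=> m hm; apply: S1_ge0 => j' hj'; apply: S1_ge0 => l' hl'; apply: h.
apply: le_trans (S1_single _ hj); last first.
  by move=> m hm; apply: S1_ge0 => l' hl'; apply: h.
apply: S1_single (hl) => m hm; exact: h.
Qed.

Lemma CSgen (S A B : R) : 0 <= A -> 0 <= B ->
  (forall lam, 0 < lam -> 2 * S <= lam * A + lam^-1 * B) -> S <= Num.sqrt A * Num.sqrt B.
Proof.
move=> hA hB h.
have [A0|Ap] := eqVneq A 0.
  rewrite A0 sqrtr0 mul0r. rewrite leNgt; apply/negP => S0.
  have l0 : 0 < (B + 1) / S by rewrite divr_gt0 // ltr_pwDr.
  have := h _ l0. rewrite A0 mulr0 add0r invf_div.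
  have : S * B / (B + 1) < 2 * S.
    rewrite ltr_pdivrMr ?ltr_pwDr //. nra.
  rewrite mulrC [S * B]mulrC. lra.
have [B0|Bp] := eqVneq B 0.
  rewrite B0 sqrtr0 mulr0. rewrite leNgt; apply/negP => S0.
  have Ap' : 0 < A by rewrite lt_def Ap hA.
  have l0 : 0 < S / (A + 1) by rewrite divr_gt0 // ltr_pwDr.
  have := h _ l0. rewrite B0 mulr0 addr0.
  have : S / (A + 1) * A < 2 * S.
    rewrite mulrAC ltr_pdivrMr ?ltr_pwDr //. nra.
  lra.
have Ap' : 0 < A by rewrite lt_def Ap hA.
have Bp' : 0 < B by rewrite lt_def Bp hB.
have sA : 0 < Num.sqrt A by rewrite sqrtr_gt0.
have sB : 0 < Num.sqrt B by rewrite sqrtr_gt0.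
have l0 : 0 < Num.sqrt B / Num.sqrt A by rewrite divr_gt0.
have := h _ l0.
have -> : Num.sqrt B / Num.sqrt A * A + (Num.sqrt B / Num.sqrt A)^-1 * B
   = 2 * (Num.sqrt A * Num.sqrt B).
  rewrite -{2}(sqr_sqrtr hA) -{3}(sqr_sqrtr hB). field.
  by apply/andP; split; rewrite gt_eqF.
lra.
Qed.

Lemma young_pt (lam a b : R) : 0 < lam -> 2 * (a * b) <= lam * a ^+ 2 + lam^-1 * b ^+ 2.
Proof.
move=> hl.
have e : lam * a ^+ 2 + lam^-1 * b ^+ 2 - 2 * (a * b) = lam^-1 * (lam * a - b) ^+ 2.
  by field; rewrite gt_eqF.
have : 0 <= lam^-1 * (lam * a - b) ^+ 2 by apply: mulr_ge0; [rewrite invr_ge0 ltW|apply: sqr_ge0].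
lra.
Qed.

Lemma CS1 f g : S1 (fun i => f i * g i) <= Num.sqrt (S1 (fun i => f i ^+ 2)) * Num.sqrt (S1 (fun i => g i ^+ 2)).
Proof.
apply: CSgen; try by apply: S1_ge0 => i _; apply: sqr_ge0.
move=> lam hl. rewrite -!S1Z -S1D. apply: S1_le => i _. exact: young_pt.
Qed.

Lemma CS3 f g : S3 (fun i j l => f i j l * g i j l) <=
  Num.sqrt (S3 (fun i j l => f i j l ^+ 2)) * Num.sqrt (S3 (fun i j l => g i j l ^+ 2)).
Proof.
apply: CSgen; try by apply: S3_ge0 => i j l _ _ _; apply: sqr_ge0.
move=> lam hl. rewrite -!S3Z -S3D. apply: S3_le => i j l _ _ _. exact: young_pt.
Qed.

Lemma CS1sq x y : (forall i, 0 <= x i) -> (forall i, 0 <= y i) ->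
  S1 (fun i => Num.sqrt (x i) * Num.sqrt (y i)) <= Num.sqrt (S1 x) * Num.sqrt (S1 y).
Proof.
move=> hx hy. have := CS1 (fun i => Num.sqrt (x i)) (fun i => Num.sqrt (y i)).
rewrite (S1_ext (f := fun i => Num.sqrt (x i) ^+ 2) (g := x)); last by move=> i _; rewrite sqr_sqrtr.
by rewrite (S1_ext (f := fun i => Num.sqrt (y i) ^+ 2) (g := y)); last by move=> i _; rewrite sqr_sqrtr.
Qed.


End Sums.

End A4.
Import A4.

Module A5.
Set Implicit Arguments. Unset Strict Implicit. Unset Printing Implicit Defensive.
Local Open Scope ring_scope.

Section Line.
Variable R : realType.
Variable N : nat.
Hypothesis N0 : (0 < N)%N.

Lemma S1_const (c : R) : S1 N (fun _ => c) = N%:R * c.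
Proof. by rewrite /S1 sumr_const_nat subSS subn0 mulr_natl. Qed.

Lemma tele (phi : nat -> R) i : (1 <= i)%N ->
  `|phi i - phi 1%N| <= \sum_(1 <= m < i) `|phi m.+1 - phi m|.
Proof.
elim: i => [//|i IH] hi.
case: i IH hi => [|i] IH hi.
  by rewrite subrr normr0 big_geq.
rewrite big_nat_recr //=.
have := IH isT.
have := ler_normD (phi i.+2 - phi i.+1) (phi i.+1 - phi 1%N).
have -> : phi i.+2 - phi i.+1 + (phi i.+1 - phi 1%N) = phi i.+2 - phi 1%N by ring.
lra.
Qed.

Lemma line1 (phi : nat -> R) i : inr N i ->
  phi i <= N%:R^-1 * S1 N phi + 2 * S1 N (fun m => `|phi m.+1 - phi m|).
Proof.
move=> /andP[h1 h2].
set TV := S1 N (fun m => `|phi m.+1 - phi m|).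
have hT : forall k, (1 <= k <= N.+1)%N -> `|phi k - phi 1%N| <= TV.
  move=> k /andP[k1 k2]. apply: le_trans (tele phi k1) _.
  rewrite /TV /S1 [X in _ <= X](big_cat_nat (n:=k)) //= lerDl.
  by apply: sumr_ge0 => m _.
have hm : forall m, inr N m -> phi i <= phi m + 2 * TV.
  move=> m /andP[m1 m2].
  have := hT i; rewrite h1 /= ltnW ?ltnS // => /(_ isT) a1.
  have := hT m; rewrite m1 /= ltnW ?ltnS // => /(_ isT) a2.
  have := ler_norm (phi i - phi 1%N). have := ler_norm (phi 1%N - phi m).
  rewrite distrC in a2. lra.
have hs := S1_le hm.
rewrite S1D !S1_const in hs.
have Np : 0 < (N%:R : R) by rewrite ltr0n.
rewrite -(ler_pM2l Np) mulrDr mulrA mulfV ?gt_eqF // mul1r.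
lra.
Qed.

End Line.

Section LW.
Variable R : realType.
Variable N : nat.
Local Notation S1 := (S1 (R:=R) N).

Lemma S1_exch (F : nat -> nat -> R) : S1 (fun i => S1 (fun j => F i j)) = S1 (fun j => S1 (fun i => F i j)).
Proof. by rewrite /A4.S1 exchange_big. Qed.

Lemma sqrt_ge0' (x : R) : 0 <= Num.sqrt x. Proof. exact: sqrtr_ge0. Qed.

Lemma LW (A B C : nat -> nat -> R) :
  (forall x y, 0 <= A x y) -> (forall x y, 0 <= B x y) -> (forall x y, 0 <= C x y) ->
  S3 N (fun i j l => Num.sqrt (A j l * B i l * C i j)) <=
  Num.sqrt (S1 (fun j => S1 (fun l => A j l)) * S1 (fun i => S1 (fun l => B i l))
            * S1 (fun i => S1 (fun j => C i j))).
Proof.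
move=> hA hB hC.
set Bp := fun l => S1 (fun i => B i l).
set Cp := fun j => S1 (fun i => C i j).
set Ap := fun l => S1 (fun j => A j l).
have hBp : forall l, 0 <= Bp l by move=> l; apply: S1_ge0.
have hCp : forall j, 0 <= Cp j by move=> j; apply: S1_ge0.
have hAp : forall l, 0 <= Ap l by move=> l; apply: S1_ge0.
have e1 : S3 N (fun i j l => Num.sqrt (A j l * B i l * C i j)) =
  S1 (fun j => S1 (fun l => Num.sqrt (A j l) * S1 (fun i => Num.sqrt (B i l) * Num.sqrt (C i j)))).
  rewrite S3E S1_exch. apply: eq_bigr => j _. rewrite S1_exch. apply: eq_bigr => l _.
  rewrite /A4.S1 mulr_sumr. apply: eq_bigr => i _.
  by rewrite sqrtrM ?mulr_ge0 // sqrtrM // mulrA.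
rewrite e1.
have s2 : S1 (fun j => S1 (fun l => Num.sqrt (A j l) * S1 (fun i => Num.sqrt (B i l) * Num.sqrt (C i j))))
   <= S1 (fun j => S1 (fun l => Num.sqrt (Bp l) * (Num.sqrt (A j l) * Num.sqrt (Cp j)))).
  apply: S1_le => j _; apply: S1_le => l _.
  rewrite mulrCA. apply: ler_wpM2l; first exact: sqrtr_ge0.
  by apply: CS1sq.
apply: le_trans s2 _.
rewrite S1_exch.
have s3 : S1 (fun l => S1 (fun j => Num.sqrt (Bp l) * (Num.sqrt (A j l) * Num.sqrt (Cp j))))
   <= S1 (fun l => Num.sqrt (Bp l) * (Num.sqrt (Ap l) * Num.sqrt (S1 Cp))).
  apply: S1_le => l _. rewrite S1Z. apply: ler_wpM2l; first exact: sqrtr_ge0.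
  by apply: CS1sq.
apply: le_trans s3 _.
have s4 : S1 (fun l => Num.sqrt (Bp l) * (Num.sqrt (Ap l) * Num.sqrt (S1 Cp)))
   = Num.sqrt (S1 Cp) * S1 (fun l => Num.sqrt (Ap l) * Num.sqrt (Bp l)).
  rewrite -S1Z; apply: eq_bigr => l _; ring.
rewrite s4.
have : Num.sqrt (S1 Cp) * S1 (fun l => Num.sqrt (Ap l) * Num.sqrt (Bp l))
   <= Num.sqrt (S1 Cp) * (Num.sqrt (S1 Ap) * Num.sqrt (S1 Bp)).
  apply: ler_wpM2l; first exact: sqrtr_ge0. exact: CS1sq.
move=> /le_trans; apply.
have eA : S1 Ap = S1 (fun j => S1 (fun l => A j l)) by rewrite /Ap S1_exch.
have eB : S1 Bp = S1 (fun i => S1 (fun l => B i l)) by rewrite /Bp S1_exch.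
have eC : S1 Cp = S1 (fun i => S1 (fun j => C i j)) by rewrite /Cp S1_exch.
rewrite eA eB eC.
have g1 : 0 <= S1 (fun j => S1 (fun l => A j l)) by apply: S1_ge0 => j _; apply: S1_ge0.
have g2 : 0 <= S1 (fun i => S1 (fun l => B i l)) by apply: S1_ge0 => j _; apply: S1_ge0.
rewrite !sqrtrM ?mulr_ge0 //. rewrite le_eqVlt; apply/orP; left; apply/eqP; ring.
Qed.

Lemma S1_shift (f : nat -> R) : (0 < N)%N -> (forall i, inr N i -> 0 <= f i) -> f N.+1 = f N ->
  S1 (fun i => f i.+1) <= 2 * S1 f.
Proof.
move=> N0 h hN.
have e1 : S1 f = f 1%N + \sum_(1 <= i < N) f i.+1 by rewrite /A4.S1 big_nat_recl.
have e2 : S1 (fun i => f i.+1) = \sum_(1 <= i < N) f i.+1 + f N.+1 by rewrite /A4.S1 big_nat_recr.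
have hNs : f N <= S1 f by apply: S1_single => //; rewrite /inr N0 leqnn.
have h1 : 0 <= f 1%N by apply: h; rewrite /inr leqnn N0.
lra.
Qed.

End LW.

End A5.
Import A5.

Module A6.
Set Implicit Arguments. Unset Strict Implicit. Unset Printing Implicit Defensive.
Local Open Scope ring_scope.

Section Sob1.
Variable R : realType.
Implicit Types u v : 'rV[R]_3.

Lemma quart_diff u1 u2 :
  `|vnorm2 u1 ^+ 2 - vnorm2 u2 ^+ 2| <= 2 * vnorm (u1 - u2) * (vnorm u1 ^+ 3 + vnorm u2 ^+ 3).
Proof.
rewrite -!vnorm_sq.
have hd := vnorm_rev u1 u2.
set a := vnorm u1 in hd *; set b := vnorm u2 in hd *.
have ha : 0 <= a := vnorm_ge0 _. have hb : 0 <= b := vnorm_ge0 _.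
have -> : (a ^+ 2) ^+ 2 - (b ^+ 2) ^+ 2 = (a - b) * ((a + b) * (a ^+ 2 + b ^+ 2)) by ring.
rewrite normrM (ger0_norm (x := (a + b) * _)); last by apply: mulr_ge0; [lra | apply: addr_ge0; apply: sqr_ge0].
have k : (a + b) * (a ^+ 2 + b ^+ 2) <= 2 * (a ^+ 3 + b ^+ 3).
  have e : 2 * (a ^+ 3 + b ^+ 3) - (a + b) * (a ^+ 2 + b ^+ 2) = (a + b) * (a - b) ^+ 2 by ring.
  have : 0 <= (a + b) * (a - b) ^+ 2 by apply: mulr_ge0; [lra|apply: sqr_ge0].
  lra.
have k0 : 0 <= (a + b) * (a ^+ 2 + b ^+ 2) by apply: mulr_ge0; [lra | apply: addr_ge0; apply: sqr_ge0].
have := ler_pM (normr_ge0 (a - b)) k0 hd k.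
have : vnorm (u1 - u2) * (2 * (a ^+ 3 + b ^+ 3)) = 2 * vnorm (u1 - u2) * (a ^+ 3 + b ^+ 3) by ring.
lra.
Qed.

End Sob1.

Section Sob.
Variable R : realType.
Variable N : nat.
Hypothesis N0 : (0 < N)%N.
Local Notation S3 := (S3 (R:=R) N).
Local Notation S1 := (S1 (R:=R) N).

Variable u : gridfun R.
Definition V i j l := vnorm2 (u i j l).
Definition W i j l := V i j l ^+ 2.
Definition X := S3 (fun i j l => V i j l ^+ 3).
Definition Y := Num.sqrt X.

Lemma V_ge0 i j l : 0 <= V i j l. Proof. exact: vnorm2_ge0. Qed.
Lemma W_ge0 i j l : 0 <= W i j l. Proof. exact: sqr_ge0. Qed.
Lemma X_ge0 : 0 <= X.
Proof. apply: S3_ge0 => *; apply: exprn_ge0; exact: V_ge0. Qed.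

Lemma SW_bound : S3 W <= Num.sqrt (S3 V) * Y.
Proof.
have := CS3 N (fun i j l => Num.sqrt (V i j l)) (fun i j l => Num.sqrt (V i j l ^+ 3)).
rewrite (S3_ext (f := fun i j l => Num.sqrt (V i j l) ^+ 2) (g := V)); last by move=> *; rewrite sqr_sqrtr // V_ge0.
rewrite (S3_ext (f := fun i j l => Num.sqrt (V i j l ^+ 3) ^+ 2) (g := fun i j l => V i j l ^+ 3)); last by move=> *; rewrite sqr_sqrtr // exprn_ge0 // V_ge0.
rewrite (S3_ext (f := fun i j l => Num.sqrt (V i j l) * Num.sqrt (V i j l ^+ 3)) (g := W)) //.
move=> i j l _ _ _. rewrite -sqrtrM ?V_ge0 // /W.
have -> : V i j l * V i j l ^+ 3 = (V i j l ^+ 2) ^+ 2 by ring.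
by rewrite sqrtr_sqr ger0_norm // sqr_ge0.
Qed.

Lemma dirbound (us : gridfun R) :
  S3 (fun i j l => vnorm2 (us i j l) ^+ 3) <= 2 * X ->
  S3 (fun i j l => `|vnorm2 (us i j l) ^+ 2 - W i j l|)
    <= 6 * Num.sqrt (S3 (fun i j l => vnorm2 (us i j l - u i j l))) * Y.
Proof.
move=> hs.
have h1 : S3 (fun i j l => `|vnorm2 (us i j l) ^+ 2 - W i j l|) <=
   2 * S3 (fun i j l => vnorm (us i j l - u i j l) * (vnorm (us i j l) ^+ 3 + vnorm (u i j l) ^+ 3)).
  rewrite -S3Z; apply: S3_le => i j l _ _ _. rewrite mulrA. exact: quart_diff.
apply: le_trans h1 _.
have h2 := CS3 N (fun i j l => vnorm (us i j l - u i j l)) (fun i j l => vnorm (us i j l) ^+ 3 + vnorm (u i j l) ^+ 3).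
rewrite (S3_ext (f := fun i j l => vnorm (us i j l - u i j l) ^+ 2) (g := fun i j l => vnorm2 (us i j l - u i j l))) in h2; last by move=> *; rewrite vnorm_sq.
have h3 : S3 (fun i j l => (vnorm (us i j l) ^+ 3 + vnorm (u i j l) ^+ 3) ^+ 2) <= 9 * X.
  have h4 : S3 (fun i j l => (vnorm (us i j l) ^+ 3 + vnorm (u i j l) ^+ 3) ^+ 2) <=
     S3 (fun i j l => 2 * vnorm2 (us i j l) ^+ 3 + 2 * V i j l ^+ 3).
    apply: S3_le => i j l _ _ _. rewrite /V -!vnorm_sq.
    set a := vnorm (us i j l); set b := vnorm (u i j l).
    have : 0 <= (a ^+ 3 - b ^+ 3) ^+ 2 by apply: sqr_ge0.
    have -> : (a ^+ 2) ^+ 3 = (a ^+ 3) ^+ 2 by ring.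
    have -> : (b ^+ 2) ^+ 3 = (b ^+ 3) ^+ 2 by ring.
    nra.
  apply: le_trans h4 _. rewrite S3D !S3Z -/X.
  have := X_ge0. lra.
have hY : Num.sqrt (S3 (fun i j l => (vnorm (us i j l) ^+ 3 + vnorm (u i j l) ^+ 3) ^+ 2)) <= 3 * Y.
  have -> : 3 * Y = Num.sqrt (9 * X).
    rewrite sqrtrM // /Y. have -> : (9:R) = 3 ^+ 2 by ring. by rewrite sqrtr_sqr ger0_norm.
  rewrite ler_sqrt //; apply: mulr_ge0 => //; exact: X_ge0.
have g0 : 0 <= Num.sqrt (S3 (fun i j l => vnorm2 (us i j l - u i j l))) by apply: sqrtr_ge0.
have := ler_wpM2l g0 hY.
lra.
Qed.

End Sob.

End A6.
Import A6.

Module A7.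
Set Implicit Arguments. Unset Strict Implicit. Unset Printing Implicit Defensive.
Local Open Scope ring_scope.

Section Sob2.
Variable R : realType.
Variable N : nat.
Hypothesis N0 : (0 < N)%N.
Local Notation S3 := (S3 (R:=R) N).
Local Notation S1 := (S1 (R:=R) N).
Local Notation inr := (inr N).

Lemma perm_x (F : nat -> nat -> nat -> R) :
  S1 (fun j => S1 (fun l => S1 (fun m => F m j l))) = S3 F.
Proof.
transitivity (S1 (fun j => S1 (fun m => S1 (fun l => F m j l)))).
  apply: eq_bigr => j _. exact: (S1_exch N (fun l m => F m j l)).
rewrite S3E. exact: (S1_exch N (fun j m => S1 (fun l => F m j l))).
Qed.
Lemma perm_y (F : nat -> nat -> nat -> R) :
  S1 (fun i => S1 (fun l => S1 (fun m => F i m l))) = S3 F.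
Proof. rewrite S3E. apply: eq_bigr => i _. exact: (S1_exch N (fun l m => F i m l)). Qed.

Lemma NinrN : inr N. Proof. by rewrite /A4.inr N0 leqnn. Qed.

Lemma shift_x (g : nat -> nat -> nat -> R) : (forall i j l, 0 <= g i j l) ->
  (forall j l, inr j -> inr l -> g N.+1 j l = g N j l) ->
  S3 (fun i j l => g i.+1 j l) <= 2 * S3 g.
Proof.
move=> h0 hN. rewrite !S3E.
apply: (S1_shift (f := fun i => S1 (fun j => S1 (fun l => g i j l)))) => //.
  by move=> i _; apply: S1_ge0 => j _; apply: S1_ge0.
apply: S1_ext => j hj; apply: S1_ext => l hl; exact: hN.
Qed.

Lemma shift_y (g : nat -> nat -> nat -> R) : (forall i j l, 0 <= g i j l) ->
  (forall i l, inr i -> inr l -> g i N.+1 l = g i N l) ->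
  S3 (fun i j l => g i j.+1 l) <= 2 * S3 g.
Proof.
move=> h0 hN. rewrite !S3E -S1Z. apply: S1_le => i hi.
apply: (S1_shift (f := fun j => S1 (fun l => g i j l))) => //.
  by move=> j _; apply: S1_ge0.
apply: S1_ext => l hl; exact: hN.
Qed.

Lemma shift_z (g : nat -> nat -> nat -> R) : (forall i j l, 0 <= g i j l) ->
  (forall i j, inr i -> inr j -> g i j N.+1 = g i j N) ->
  S3 (fun i j l => g i j l.+1) <= 2 * S3 g.
Proof.
move=> h0 hN. rewrite !S3E -S1Z. apply: S1_le => i hi. rewrite -S1Z. apply: S1_le => j hj.
apply: (S1_shift (f := fun l => g i j l)) => //. exact: hN.
Qed.

Lemma hN_inv : (hN R N)^-1 = N%:R.
Proof. by rewrite /hN invrK. Qed.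

Lemma Nr0 : 0 < (N%:R : R). Proof. by rewrite ltr0n. Qed.

Variable u : gridfun R.
Hypothesis HN1 : forall j l, inr j -> inr l -> u N.+1 j l = u N j l.
Hypothesis HN2 : forall i l, inr i -> inr l -> u i N.+1 l = u i N l.
Hypothesis HN3 : forall i j, inr i -> inr j -> u i j N.+1 = u i j N.

Local Notation V := (V u).
Local Notation W := (W u).
Local Notation X := (X N u).
Local Notation Y := (Y N u).

Definition gtot i j l := vnorm2 (Dx N u i j l) + vnorm2 (Dy N u i j l) + vnorm2 (Dz N u i j l).

Lemma gradsqE : gradsq N u = N%:R^-1 ^+ 3 * S3 gtot.
Proof. by []. Qed.
Lemma l2sqE : l2sq N u = N%:R^-1 ^+ 3 * S3 V.
Proof. by []. Qed.

Lemma gtot_ge0 i j l : 0 <= gtot i j l.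
Proof. by rewrite /gtot !addr_ge0 // vnorm2_ge0. Qed.

Lemma grad_dir (us : gridfun R) :
  (forall i j l, vnorm2 (us i j l - u i j l) * N%:R ^+ 2 <= gtot i j l) ->
  S3 (fun i j l => vnorm2 (us i j l - u i j l)) <= N%:R * gradsq N u.
Proof.
move=> h.
have Np := Nr0.
have e : N%:R * gradsq N u = N%:R^-1 ^+ 2 * S3 gtot.
  rewrite gradsqE; field; by rewrite gt_eqF.
rewrite e -S3Z. apply: S3_le => i j l _ _ _.
rewrite -(ler_pM2r (exprn_gt0 2 Np)) mulrAC -exprMn mulVf ?gt_eqF // expr1n mul1r.
exact: h.
Qed.

Lemma DxE i j l : vnorm2 (Dx N u i j l) = N%:R ^+ 2 * vnorm2 (u i.+1 j l - u i j l).
Proof. by rewrite /Dx hN_inv vnorm2_scale. Qed.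
Lemma DyE i j l : vnorm2 (Dy N u i j l) = N%:R ^+ 2 * vnorm2 (u i j.+1 l - u i j l).
Proof. by rewrite /Dy hN_inv vnorm2_scale. Qed.
Lemma DzE i j l : vnorm2 (Dz N u i j l) = N%:R ^+ 2 * vnorm2 (u i j l.+1 - u i j l).
Proof. by rewrite /Dz hN_inv vnorm2_scale. Qed.

Lemma Dx_bound i j l : vnorm2 (u i.+1 j l - u i j l) * N%:R ^+ 2 <= gtot i j l.
Proof.
have := vnorm2_ge0 (Dy N u i j l); have := vnorm2_ge0 (Dz N u i j l).
rewrite /gtot DxE mulrC. lra.
Qed.
Lemma Dy_bound i j l : vnorm2 (u i j.+1 l - u i j l) * N%:R ^+ 2 <= gtot i j l.
Proof.
have := vnorm2_ge0 (Dx N u i j l); have := vnorm2_ge0 (Dz N u i j l).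
rewrite /gtot DyE mulrC. lra.
Qed.
Lemma Dz_bound i j l : vnorm2 (u i j l.+1 - u i j l) * N%:R ^+ 2 <= gtot i j l.
Proof.
have := vnorm2_ge0 (Dx N u i j l); have := vnorm2_ge0 (Dy N u i j l).
rewrite /gtot DzE mulrC. lra.
Qed.


Lemma sobolev i j l : inr i -> inr j -> inr l ->
  V i j l <= N%:R * (2 * l2sq N u + 288 * gradsq N u).
Proof.
move=> hi hj hl.
have Np := Nr0.
have Ni0 : 0 <= (N%:R : R)^-1 by rewrite invr_ge0 ltW.
set A := fun j l => N%:R^-1 * S1 (fun m => W m j l) + 2 * S1 (fun m => `|W m.+1 j l - W m j l|).
set B := fun i l => N%:R^-1 * S1 (fun m => W i m l) + 2 * S1 (fun m => `|W i m.+1 l - W i m l|).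
set C := fun i j => N%:R^-1 * S1 (fun m => W i j m) + 2 * S1 (fun m => `|W i j m.+1 - W i j m|).
have gen0 : forall (f g : nat -> R), (forall m, 0 <= f m) ->
   0 <= N%:R^-1 * S1 f + 2 * S1 (fun m => `|g m|).
  move=> f g hf. apply: addr_ge0; apply: mulr_ge0 => //; apply: S1_ge0 => //.
have hA : forall x y, 0 <= A x y by move=> x y; apply: gen0 => m; apply: W_ge0.
have hB : forall x y, 0 <= B x y by move=> x y; apply: gen0 => m; apply: W_ge0.
have hC : forall x y, 0 <= C x y by move=> x y; apply: gen0 => m; apply: W_ge0.
have hpt : forall i j l, inr i -> inr j -> inr l ->
    V i j l ^+ 3 <= Num.sqrt (A j l * B i l * C i j).
  move=> i' j' l' hi' hj' hl'.
  have wa : W i' j' l' <= A j' l' := (line1 N0 (fun m => W m j' l') hi').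
  have wb : W i' j' l' <= B i' l' := (line1 N0 (fun m => W i' m l') hj').
  have wc : W i' j' l' <= C i' j' := (line1 N0 (fun m => W i' j' m) hl').
  have w0 := W_ge0 u i' j' l'.
  have v0 := V_ge0 u i' j' l'.
  rewrite -(ger0_norm (exprn_ge0 3 v0)) -sqrtr_sqr ler_sqrt; last first.
    by apply: mulr_ge0; [apply: mulr_ge0|].
  have -> : (V i' j' l' ^+ 3) ^+ 2 = W i' j' l' * W i' j' l' * W i' j' l' by rewrite /A6.W; ring.
  apply: ler_pM => //; [exact: mulr_ge0|].
  by apply: ler_pM.
have hX : X <= Num.sqrt (S1 (fun j => S1 (fun l => A j l)) * S1 (fun i => S1 (fun l => B i l))
            * S1 (fun i => S1 (fun j => C i j))).
  apply: le_trans _ (LW N hA hB hC). exact: S3_le.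
have eA : S1 (fun j => S1 (fun l => A j l)) =
    N%:R^-1 * S3 W + 2 * S3 (fun i j l => `|W i.+1 j l - W i j l|).
  rewrite -!perm_x -!S1Z -S1D. apply: eq_bigr => j' _. rewrite -!S1Z -S1D. by [].
have eB : S1 (fun i => S1 (fun l => B i l)) =
    N%:R^-1 * S3 W + 2 * S3 (fun i j l => `|W i j.+1 l - W i j l|).
  rewrite -!perm_y -!S1Z -S1D. apply: eq_bigr => i' _. rewrite -!S1Z -S1D. by [].
have eC : S1 (fun i => S1 (fun j => C i j)) =
    N%:R^-1 * S3 W + 2 * S3 (fun i j l => `|W i j l.+1 - W i j l|).
  rewrite !S3E -!S1Z -S1D. apply: eq_bigr => i' _. rewrite -!S1Z -S1D. by [].
set l2 := l2sq N u. set g := gradsq N u.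
have l20 : 0 <= l2 by rewrite /l2 l2sqE; apply: mulr_ge0; [apply: exprn_ge0|apply: S3_ge0 => *; apply: V_ge0].
have g0 : 0 <= g by rewrite /g gradsqE; apply: mulr_ge0; [apply: exprn_ge0|apply: S3_ge0 => *; apply: gtot_ge0].
set P := Num.sqrt (N%:R * l2) + 12 * Num.sqrt (N%:R * g).
have Y0 : 0 <= Y by apply: sqrtr_ge0.
have P0 : 0 <= P by apply: addr_ge0; [apply: sqrtr_ge0| apply: mulr_ge0 => //; apply: sqrtr_ge0].
have V3 : forall i j l, 0 <= V i j l ^+ 3 by move=> *; apply: exprn_ge0; apply: V_ge0.
have SWb : N%:R^-1 * S3 W <= Num.sqrt (N%:R * l2) * Y.
  have e : S3 V = N%:R ^+ 3 * l2 by rewrite /l2 l2sqE mulrA -exprMn mulfV ?gt_eqF // expr1n mul1r.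
  have := SW_bound N u. rewrite -/(Y) e => h.
  have e3 : Num.sqrt (N%:R ^+ 3 * l2) = N%:R * Num.sqrt (N%:R * l2).
    rewrite (_ : N%:R ^+ 3 * l2 = N%:R ^+ 2 * (N%:R * l2)); last by ring.
    by rewrite sqrtrM ?exprn_ge0 ?ltW // sqrtr_sqr ger0_norm ?ltW.
  have -> : Num.sqrt (N%:R * l2) = N%:R^-1 * Num.sqrt (N%:R ^+ 3 * l2).
    by rewrite e3; field; rewrite gt_eqF.
  rewrite -mulrA. exact: ler_wpM2l.
have dirb : forall us : gridfun R,
    S3 (fun i j l => vnorm2 (us i j l) ^+ 3) <= 2 * X ->
    (forall i j l, vnorm2 (us i j l - u i j l) * N%:R ^+ 2 <= gtot i j l) ->
    S3 (fun i j l => `|vnorm2 (us i j l) ^+ 2 - W i j l|) <= 6 * Num.sqrt (N%:R * g) * Y.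
  move=> us h1 h2. apply: le_trans (dirbound h1) _.
  apply: ler_wpM2r => //. apply: ler_wpM2l => //. rewrite ler_sqrt; last by apply: mulr_ge0 => //; apply: ltW.
  exact: grad_dir.
have dX := dirb (fun i j l => u i.+1 j l).
have dY := dirb (fun i j l => u i j.+1 l).
have dZ := dirb (fun i j l => u i j l.+1).
have sX : S3 (fun i j l => vnorm2 (u i.+1 j l) ^+ 3) <= 2 * X.
  apply: (shift_x (g := fun i j l => V i j l ^+ 3)) => //.
  by move=> j' l' hj' hl'; rewrite /A6.V HN1.
have sY : S3 (fun i j l => vnorm2 (u i j.+1 l) ^+ 3) <= 2 * X.
  apply: (shift_y (g := fun i j l => V i j l ^+ 3)) => //.
  by move=> i' l' hi' hl'; rewrite /A6.V HN2.
have sZ : S3 (fun i j l => vnorm2 (u i j l.+1) ^+ 3) <= 2 * X.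
  apply: (shift_z (g := fun i j l => V i j l ^+ 3)) => //.
  by move=> i' j' hi' hj'; rewrite /A6.V HN3.
have bX := dX sX Dx_bound.
have bY := dY sY Dy_bound.
have bZ := dZ sZ Dz_bound.
have hSA : S1 (fun j => S1 (fun l => A j l)) <= Y * P.
  rewrite eA /P. have := bX. rewrite /A6.W. lra.
have hSB : S1 (fun i => S1 (fun l => B i l)) <= Y * P.
  rewrite eB /P. have := bY. rewrite /A6.W. lra.
have hSC : S1 (fun i => S1 (fun j => C i j)) <= Y * P.
  rewrite eC /P. have := bZ. rewrite /A6.W. lra.
have sA0 : 0 <= S1 (fun j => S1 (fun l => A j l)) by apply: S1_ge0 => *; apply: S1_ge0.
have sB0 : 0 <= S1 (fun i => S1 (fun l => B i l)) by apply: S1_ge0 => *; apply: S1_ge0.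
have sC0 : 0 <= S1 (fun i => S1 (fun j => C i j)) by apply: S1_ge0 => *; apply: S1_ge0.
have YP0 : 0 <= Y * P by apply: mulr_ge0.
have hX2 : X <= Num.sqrt (Y * P * (Y * P) * (Y * P)).
  apply: le_trans hX _. rewrite ler_sqrt; last by rewrite !mulr_ge0.
  apply: ler_pM => //; first by apply: mulr_ge0.
  by apply: ler_pM.
have XY : X = Y ^+ 2 by rewrite /A6.Y sqr_sqrtr // X_ge0.
have hYP : Y <= P ^+ 3.
  have [Y00|Yp] := eqVneq Y 0; first by rewrite Y00 exprn_ge0.
  have Yp' : 0 < Y by rewrite lt_def Yp Y0.
  have h4 : Y ^+ 4 <= (Y * P) ^+ 3.
    have := hX2. rewrite XY => h.
    have h' : (Y ^+ 2) ^+ 2 <= Num.sqrt (Y * P * (Y * P) * (Y * P)) ^+ 2.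
      by rewrite ler_pXn2r ?nnegrE ?sqrtr_ge0 ?exprn_ge0.
    rewrite sqr_sqrtr in h'; last by rewrite !mulr_ge0.
    have -> : Y ^+ 4 = (Y ^+ 2) ^+ 2 by ring.
    have -> : (Y * P) ^+ 3 = Y * P * (Y * P) * (Y * P) by ring.
    exact: h'.
  have Y3 : 0 < Y ^+ 3 by apply: exprn_gt0.
  rewrite -(ler_pM2l Y3).
  have -> : Y ^+ 3 * Y = Y ^+ 4 by ring.
  by rewrite -exprMn.
have hV3 : V i j l ^+ 3 <= X.
  apply: (S3_single (g := fun i j l => V i j l ^+ 3)) => //.
have hV : V i j l <= P ^+ 2.
  rewrite -(@ler_pXn2r _ 3%N) ?nnegrE ?V_ge0 ?exprn_ge0 //.
  apply: le_trans hV3 _. rewrite XY.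
  have -> : (P ^+ 2) ^+ 3 = (P ^+ 3) ^+ 2 by ring.
  by rewrite ler_pXn2r ?nnegrE ?exprn_ge0.
apply: le_trans hV _.
rewrite /P.
set a := Num.sqrt (N%:R * l2); set b := Num.sqrt (N%:R * g).
have ea : a ^+ 2 = N%:R * l2 by rewrite /a sqr_sqrtr // mulr_ge0 // ltW.
have eb : b ^+ 2 = N%:R * g by rewrite /b sqr_sqrtr // mulr_ge0 // ltW.
have : 0 <= (a - 12 * b) ^+ 2 by apply: sqr_ge0.
have -> : N%:R * (2 * l2 + 288 * g) = 2 * (N%:R * l2) + 288 * (N%:R * g) by ring.
rewrite -ea -eb. nra.
Qed.

End Sob2.

End A7.
Import A7.

Module A8.
Set Implicit Arguments. Unset Strict Implicit. Unset Printing Implicit Defensive.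
Local Open Scope ring_scope.

Section Grid2.
Variable R : realType.
Variable N : nat.
Hypothesis N0 : (0 < N)%N.
Local Notation inr := (inr N).

Lemma clamp_inr i : inr (clampN N i).
Proof.
rewrite /clampN /A4.inr. case: eqP => [_|i0]; first lia.
case: (ltnP N i) => h; lia.
Qed.

Lemma clamp_id i : inr i -> clampN N i = i.
Proof.
rewrite /A4.inr /clampN => hi. case: eqP => [e|_]; first lia.
case: (ltnP N i) => h; lia.
Qed.

Lemma clampSN : clampN N N.+1 = N.
Proof. by rewrite /clampN /= ltnSn. Qed.

Lemma cl_red1 (T : Type) (g : nat -> T) c : (c <= N.+1)%N -> g 0%N = g 1%N -> g N.+1 = g N ->
  g c = g (clampN N c).
Proof.
move=> hc h0 hN. rewrite /clampN. case: eqP => [->|c0] //.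
case: (ltnP N c) => h //.
have -> : c = N.+1 by lia.
by [].
Qed.

Lemma clamp_red (f : gridfun R) i j l : inX N f -> (i <= N.+1)%N -> (j <= N.+1)%N -> (l <= N.+1)%N ->
  f i j l = f (clampN N i) (clampN N j) (clampN N l).
Proof.
move=> [h1 [h2 h3]] hi hj hl.
have cle : forall c, (clampN N c <= N.+1)%N.
  by move=> c; have /andP[_ /leqW] := clamp_inr c.
have e1 : f i j l = f (clampN N i) j l.
  by apply: (cl_red1 (g := fun c => f c j l)) => //; case: (h1 j l hj hl).
have e2 : f (clampN N i) j l = f (clampN N i) (clampN N j) l.
  by apply: (cl_red1 (g := fun c => f _ c l)) => //; case: (h2 _ l (cle i) hl).
have e3 : f (clampN N i) (clampN N j) l = f (clampN N i) (clampN N j) (clampN N l).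
  by apply: (cl_red1 (g := fun c => f _ _ c)) => //; case: (h3 _ _ (cle i) (cle j)).
by rewrite e1 e2 e3.
Qed.

Lemma coord_in c : inr c -> 0 <= Defs.coord R N c <= 1.
Proof.
move=> /andP[h1 h2]. rewrite /Defs.coord /hN.
have Np : 0 < (N%:R : R) by rewrite ltr0n.
have c1 : 1 <= (c%:R : R) by rewrite ler1n.
have c2 : (c%:R : R) <= N%:R by rewrite ler_nat.
have i0 : 0 < (N%:R : R)^-1 by rewrite invr_gt0.
have h2i : (2:R)^-1 + 2^-1 = 1 by field.
have hi2 : 0 < (2:R)^-1 by rewrite invr_gt0.
apply/andP; split.
  apply: mulr_ge0; lra.
apply: (@le_trans _ _ (N%:R * (N%:R : R)^-1)); last by rewrite mulfV ?gt_eqF.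
apply: ler_wpM2r; lra.
Qed.

Lemma coord_step i : inr i -> `|Defs.coord R N (clampN N i.+1) - Defs.coord R N (clampN N i)| <= (N%:R : R)^-1.
Proof.
move=> hi. rewrite (clamp_id hi) /Defs.coord /hN.
have i0 : 0 < (N%:R : R)^-1 by rewrite invr_gt0 ltr0n.
have [lt|ge] := ltnP i N.
  rewrite clamp_id; last by rewrite /A4.inr lt.
  have -> : (i.+1%:R - 2^-1) * (N%:R : R)^-1 - (i%:R - 2^-1) * N%:R^-1 = N%:R^-1.
    by rewrite -addn1 natrD; ring.
  by rewrite (ger0_norm (ltW i0)).
have e : i = N by move: hi ge; rewrite /A4.inr; lia.
rewrite e clampSN subrr normr0. exact: ltW.
Qed.

Variable Cs : R.
Variable me : R -> R -> R -> 'rV[R]_3.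
Hypothesis hW : W1inf_bounded Cs me.
Hypothesis hU : forall x1 x2 x3, in_cube x1 x2 x3 -> vnorm (me x1 x2 x3) = 1.

Lemma cube_cl i j l : in_cube (Defs.coord R N (clampN N i)) (Defs.coord R N (clampN N j)) (Defs.coord R N (clampN N l)).
Proof. by split; apply: coord_in; apply: clamp_inr. Qed.

Lemma mu_unit i j l : vnorm2 (Ph N me i j l) = 1.
Proof. have h := hU (cube_cl i j l). by rewrite /Ph -vnorm_sq h expr1n. Qed.

Lemma dist3_x (x1 y1 x2 x3 : R) : dist3 x1 x2 x3 y1 x2 x3 = `|x1 - y1|.
Proof. by rewrite /dist3 !subrr expr0n !addr0 sqrtr_sqr. Qed.
Lemma dist3_y (x1 x2 y2 x3 : R) : dist3 x1 x2 x3 x1 y2 x3 = `|x2 - y2|.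
Proof. by rewrite /dist3 !subrr expr0n add0r addr0 sqrtr_sqr. Qed.
Lemma dist3_z (x1 x2 x3 y3 : R) : dist3 x1 x2 x3 x1 x2 y3 = `|x3 - y3|.
Proof. by rewrite /dist3 !subrr expr0n !add0r sqrtr_sqr. Qed.

Lemma Cs_ge0 : 0 <= Cs.
Proof.
case: hW => h _. have := h _ _ _ (cube_cl 0 0 0). rewrite hU ?ler01 //; last exact: cube_cl.
move=> h1; lra.
Qed.

Lemma mu_step_aux (v : 'rV[R]_3) d : vnorm v <= Cs * d -> 0 <= d -> d <= (N%:R : R)^-1 ->
  vnorm2 v * N%:R ^+ 2 <= Cs ^+ 2.
Proof.
move=> h d0 dN.
have Np : 0 < (N%:R : R) by rewrite ltr0n.
have h2 : vnorm v <= Cs * N%:R^-1.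
  apply: le_trans h _. apply: ler_wpM2l => //; exact: Cs_ge0.
have := vnorm2_le_sq h2. rewrite exprMn => h3.
have := ler_wpM2r (exprn_ge0 2 (ltW Np)) h3.
by rewrite -mulrA -exprMn mulVf ?gt_eqF // expr1n mulr1.
Qed.

Lemma mu_step_x i j l : inr i ->
  vnorm2 (Ph N me i.+1 j l - Ph N me i j l) * N%:R ^+ 2 <= Cs ^+ 2.
Proof.
move=> hi. case: hW => _ hL.
apply: (mu_step_aux (d := `|Defs.coord R N (clampN N i.+1) - Defs.coord R N (clampN N i)|)) => //.
- rewrite /Ph. have := hL _ _ _ _ _ _ (cube_cl i.+1 j l) (cube_cl i j l). by rewrite dist3_x.
- exact: coord_step.
Qed.
Lemma mu_step_y i j l : inr j ->
  vnorm2 (Ph N me i j.+1 l - Ph N me i j l) * N%:R ^+ 2 <= Cs ^+ 2.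
Proof.
move=> hj. case: hW => _ hL.
apply: (mu_step_aux (d := `|Defs.coord R N (clampN N j.+1) - Defs.coord R N (clampN N j)|)) => //.
- rewrite /Ph. have := hL _ _ _ _ _ _ (cube_cl i j.+1 l) (cube_cl i j l). by rewrite dist3_y.
- exact: coord_step.
Qed.
Lemma mu_step_z i j l : inr l ->
  vnorm2 (Ph N me i j l.+1 - Ph N me i j l) * N%:R ^+ 2 <= Cs ^+ 2.
Proof.
move=> hl. case: hW => _ hL.
apply: (mu_step_aux (d := `|Defs.coord R N (clampN N l.+1) - Defs.coord R N (clampN N l)|)) => //.
- rewrite /Ph. have := hL _ _ _ _ _ _ (cube_cl i j l.+1) (cube_cl i j l). by rewrite dist3_z.
- exact: coord_step.
Qed.

End Grid2.

End A8.
Import A8.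

Module A9.
Set Implicit Arguments. Unset Strict Implicit. Unset Printing Implicit Defensive.
Local Open Scope ring_scope.

Section Inv.
Variable R : realType.
Variable N : nat.
Hypothesis N0 : (0 < N)%N.
Variable u : gridfun R.
Hypothesis HN1 : forall j l, inr N j -> inr N l -> u N.+1 j l = u N j l.
Hypothesis HN2 : forall i l, inr N i -> inr N l -> u i N.+1 l = u i N l.
Hypothesis HN3 : forall i j, inr N i -> inr N j -> u i j N.+1 = u i j N.

Lemma diff_bound (x y : 'rV[R]_3) : vnorm2 (x - y) <= 2 * vnorm2 x + 2 * vnorm2 y.
Proof.
rewrite !vnorm2E !mxE.
set a := x 0 0; set b := x 0 1; set c := x 0 2; set d := y 0 0; set e := y 0 1; set f := y 0 2.
have := sqr_ge0 (a+d); have := sqr_ge0 (b+e); have := sqr_ge0 (c+f). nra.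
Qed.

Lemma inverse_est : gradsq N u <= 18 * N%:R ^+ 2 * l2sq N u.
Proof.
have Np : 0 < (N%:R : R) by rewrite ltr0n.
rewrite gradsqE l2sqE.
rewrite mulrCA. apply: ler_wpM2l; first by apply: exprn_ge0; rewrite invr_ge0 ltW.
set V := A6.V u.
have hV : forall i j l, 0 <= V i j l by move=> *; apply: V_ge0.
have e1 : S3 N (gtot N u) <= N%:R ^+ 2 * S3 N (fun i j l =>
     (2 * V i.+1 j l + 2 * V i j l) + (2 * V i j.+1 l + 2 * V i j l) + (2 * V i j l.+1 + 2 * V i j l)).
  rewrite -S3Z. apply: S3_le => i j l _ _ _.
  rewrite /gtot !DxE !DyE !DzE -!mulrDr. apply: ler_wpM2l; first by apply: exprn_ge0; apply: ltW.
  have h1 := diff_bound (u i.+1 j l) (u i j l). have h2 := diff_bound (u i j.+1 l) (u i j l). have h3 := diff_bound (u i j l.+1) (u i j l). rewrite /V /A6.V. lra.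
apply: le_trans e1 _.
have -> : 18 * N%:R ^+ 2 * S3 N V = N%:R ^+ 2 * (18 * S3 N V) by ring. apply: ler_wpM2l; first by apply: exprn_ge0; apply: ltW.
rewrite !S3D !S3Z.
have sx := shift_x N0 hV (fun j l hj hl => congr1 (@vnorm2 R) (HN1 hj hl)).
have sy := shift_y N0 hV (fun i l hi hl => congr1 (@vnorm2 R) (HN2 hi hl)).
have sz := shift_z N0 hV (fun i j hi hj => congr1 (@vnorm2 R) (HN3 hi hj)).
have s0 : 0 <= S3 N V by apply: S3_ge0.
rewrite /V in sx sy sz s0 *.
lra.
Qed.

End Inv.

Section P3b.
Variable R : realType.
Implicit Types a b : 'rV[R]_3.

Lemma P3b a a' b b' (eta eps : R) : vnorm2 a = 1 -> vnorm2 a' = 1 ->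
  0 <= eta -> eta <= 2^-1 -> vnorm2 (a - b) <= eta ^+ 2 -> vnorm2 (a' - b') <= eta ^+ 2 -> 0 < eps ->
  vnorm2 ((a' - nrm b') - (a - nrm b))
  <= (1 + eps) / (1 - eta) ^+ 2 * vnorm2 ((a' - b') - (a - b))
     + (1 + eps^-1) * 36 * vnorm2 (a - b) * vnorm2 (a' - a).
Proof.
move=> ha ha' h0 h1 ht ht' he.
have := P3 ha ha' h0 h1 ht ht' he.
have -> : a - (a - b) = b by apply/rowP => i; rewrite !mxE; ring.
have -> : a' - (a' - b') = b' by apply/rowP => i; rewrite !mxE; ring.
by [].
Qed.

End P3b.

End A9.
Import A9.

Unset Implicit Arguments. Set Strict Implicit.
Local Open Scope ring_scope.

Lemma powq (R : realType) (k : R) (n : nat) : 0 <= k -> powR k (n%:R / 8) = powR k (8^-1) ^+ n.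
Proof.
move=> k0. rewrite mulrC powRrM powR_mulrn //. exact: powR_ge0.
Qed.

Lemma sqrt_le_sq (R : realType) (x y : R) : 0 <= x -> Num.sqrt x <= y -> x <= y ^+ 2.
Proof.
move=> x0 h. have y0 : 0 <= y by apply: le_trans h; apply: sqrtr_ge0.
rewrite -(sqr_sqrtr x0). by rewrite ler_pXn2r ?nnegrE ?sqrtr_ge0.
Qed.

Lemma qfacts (R : realType) (C2 q q0 : R) : 0 < C2 -> 0 < q -> q <= q0 ->
  160 * C2 * q0 <= 1 -> q0 <= 2^-1 ->
  2 * (80 * C2 * q ^+ 14) <= q ^+ 10 * q ^+ 2 /\ 80 * C2 * q ^+ 14 <= 4^-1.
Proof.
move=> C20 qp qq0 q0c q0h.
have q1 : q <= 1.
  have : (2:R)^-1 + 2^-1 = 1 by field.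
  have : 0 < (2:R)^-1 by rewrite invr_gt0.
  lra.
have q160 : 160 * C2 * q <= 1.
  apply: le_trans q0c. apply: ler_wpM2l => //. apply: mulr_ge0 => //; exact: ltW.
have q12 : q ^+ 12 <= q.
  have h : q ^+ 11 <= 1 by apply: exprn_ile1 => //; exact: ltW.
  have -> : q ^+ 12 = q * q ^+ 11 by rewrite exprS.
  have := ler_wpM2l (ltW qp) h. by rewrite mulr1.
have q13 : q ^+ 13 <= q ^+ 12.
  have -> : q ^+ 13 = q * q ^+ 12 by rewrite exprS.
  have := ler_wpM2r (exprn_ge0 12 (ltW qp)) q1. by rewrite mul1r.
have e0 : 2 * (80 * C2 * q ^+ 14) = (160 * C2 * q) * q ^+ 13.
  rewrite (exprS q 13). ring.
have h13 : (160 * C2 * q) * q ^+ 13 <= q ^+ 13.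
  have := ler_wpM2r (exprn_ge0 13 (ltW qp)) q160. by rewrite mul1r.
have e1 : q ^+ 10 * q ^+ 2 = q ^+ 12 by rewrite -exprD.
split.
  rewrite e0 e1. exact: le_trans h13 q13.
have h2 : 2 * (80 * C2 * q ^+ 14) <= 2^-1.
  rewrite e0. apply: le_trans h13 _. apply: le_trans q13 _. apply: le_trans q12 _. exact: le_trans qq0 q0h.
have : (4:R)^-1 = 2^-1 / 2 by field.
set z := 80 * C2 * q ^+ 14 in h2 *.
move=> ->. lra.
Qed.

Theorem mainTheorem3 (R : realType) (Cs C1 C2 : R) :
  0 < Cs -> 0 < C1 -> 0 < C2 ->
  exists k0 : R, 0 < k0 /\
  forall delta : R, 0 < delta ->
  exists Cd : R,
  forall (N : nat) (k : R) (me : R -> R -> R -> 'rV[R]_3) (mt : gridfun R),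
    (0 < N)%N -> 0 < k ->
    C1 * hN R N <= k -> k <= C2 * hN R N ->
    k <= k0 -> hN R N <= k0 ->
    W1inf_bounded Cs me ->
    (forall x1 x2 x3, in_cube x1 x2 x3 -> vnorm (me x1 x2 x3) = 1) ->
    inX N mt ->
    let mu := Ph N me in
    let et := gsub mu mt in
    let e := gsub mu (normalize mt) in
    l2norm N et <= 2 * powR k (15 / 8) ->
    gradnorm N et <= 2^-1 * powR k (11 / 8) ->
    [/\ (forall i j l, (i <= N.+1)%N -> (j <= N.+1)%N -> (l <= N.+1)%N ->
           mt i j l != 0),
        l2sq N et >= (1 - powR k (5 / 4)) * l2sq N e
                     + (1 - powR k (1 / 4)) * l2sq N (gsub et e)
      & gradsq N e <= (1 + delta) * gradsq N et + Cd * l2sq N et].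
Proof.
move=> Cs0 C10 C20.
set q0 := (2 + 160 * C2)^-1.
have q0p : 0 < q0 by rewrite invr_gt0; lra.
have q0h : q0 <= 2^-1.
  by rewrite /q0 lef_pV2 ?posrE //; lra.
have q0c : 160 * C2 * q0 <= 1.
  rewrite /q0 ler_pdivrMr; lra.
exists (q0 ^+ 8); split; first exact: exprn_gt0.
move=> delta hd.
set eps := delta / 2.
have epsp : 0 < eps by rewrite divr_gt0.
set th := delta / (4 * (1 + delta)).
have thp : 0 < th by rewrite divr_gt0 //; lra.
set kap := th ^+ 2 / (80 * C2).
have kapp : 0 < kap by rewrite divr_gt0 ?exprn_gt0 //; lra.
exists (72 * (1 + eps) * (C2 / kap) ^+ 2 + 108 * (1 + eps^-1) * Cs ^+ 2).
move=> N k me mt N0 kp hk1 hk2 hkk0 hhk0 hW hU hX mu et e hl2 hg.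
set q := powR k (8^-1).
have qp : 0 < q by apply: powR_gt0.
have kq : k = q ^+ 8.
  rewrite /q -powq ?ltW // (_ : (8%:R : R) / 8 = 1) ?powRr1 ?ltW //.
  by rewrite divff // pnatr_eq0.
have qq0 : q <= q0.
  have -> : q0 = powR (q0 ^+ 8) (8^-1).
    rewrite -powR_mulrn ?ltW // -powRrM (_ : (8%:R : R) * 8^-1 = 1) ?powRr1 ?ltW //.
    by rewrite mulfV // pnatr_eq0.
  apply: ge0_ler_powR => //; rewrite ?nnegrE ?ltW ?exprn_gt0 //. by rewrite invr_gt0.
have q1 : q <= 1 by lra.
have Np : 0 < (N%:R : R) by rewrite ltr0n.
have hNk : N%:R * k <= C2.
  move: hk2; rewrite /hN => h. have := ler_wpM2l (ltW Np) h.
  by rewrite mulrCA mulfV ?gt_eqF // mulr1.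
have l20 : 0 <= l2sq N et.
  rewrite /l2sq /gsum. apply: mulr_ge0; first by apply: exprn_ge0; rewrite /hN invr_ge0 ltW.
  by apply: S3_ge0 => *; apply: vnorm2_ge0.
have g0 : 0 <= gradsq N et.
  rewrite /gradsq /gsum. apply: mulr_ge0; first by apply: exprn_ge0; rewrite /hN invr_ge0 ltW.
  by apply: S3_ge0 => *; apply: gtot_ge0.
have l2b : l2sq N et <= 4 * q ^+ 30.
  have := sqrt_le_sq R _ _ l20 hl2. rewrite (powq R k 15 (ltW kp)) -/q.
  by have -> : (2 * q ^+ 15) ^+ 2 = 4 * q ^+ 30 by ring.
have gb : gradsq N et <= 4^-1 * q ^+ 22.
  have := sqrt_le_sq R _ _ g0 hg. rewrite (powq R k 11 (ltW kp)) -/q.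
  by have -> : (2^-1 * q ^+ 11) ^+ 2 = 4^-1 * q ^+ 22 by field.
have hNin := NinrN N0.
have muN1 : forall j l, mu N.+1 j l = mu N j l by move=> j l; rewrite /mu /Ph clampSN (clamp_id N0 hNin).
have muN2 : forall i l, mu i N.+1 l = mu i N l by move=> i l; rewrite /mu /Ph clampSN (clamp_id N0 hNin).
have muN3 : forall i j, mu i j N.+1 = mu i j N by move=> i j; rewrite /mu /Ph clampSN (clamp_id N0 hNin).
have inrS : forall i, inr N i -> (i <= N.+1)%N by move=> i /andP[_ h]; exact: leqW.
have etN1 : forall j l, inr N j -> inr N l -> et N.+1 j l = et N j l.
  move=> j l hj hl. rewrite /et /gsub muN1. case: hX => h _. by case: (h j l (inrS _ hj) (inrS _ hl)) => _ ->.
have etN2 : forall i l, inr N i -> inr N l -> et i N.+1 l = et i N l.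
  move=> i l hi hl. rewrite /et /gsub muN2. case: hX => _ [h _]. by case: (h i l (inrS _ hi) (inrS _ hl)) => _ ->.
have etN3 : forall i j, inr N i -> inr N j -> et i j N.+1 = et i j N.
  move=> i j hi hj. rewrite /et /gsub muN3. case: hX => _ [_ h]. by case: (h i j (inrS _ hi) (inrS _ hj)) => _ ->.
set M := 80 * C2 * q ^+ 14.
have hV : forall i j l, inr N i -> inr N j -> inr N l -> vnorm2 (et i j l) <= M.
  move=> i j l hi hj hl.
  have := sobolev N0 etN1 etN2 etN3 hi hj hl. rewrite /A6.V => h.
  apply: le_trans h _.
  have q8 : q ^+ 8 <= 1 by apply: exprn_ile1; lra.
  have e1 : N%:R * (2 * l2sq N et + 288 * gradsq N et) <= N%:R * (80 * q ^+ 22).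
    apply: ler_wpM2l; first exact: ltW.
    have : q ^+ 30 = q ^+ 22 * q ^+ 8 by rewrite -exprD.
    have : 0 <= q ^+ 22 by apply: exprn_ge0; apply: ltW.
    nra.
  apply: le_trans e1 _.
  have -> : N%:R * (80 * q ^+ 22) = 80 * q ^+ 14 * (N%:R * q ^+ 8) by rewrite (_ : 22 = 14 + 8)%N // exprD; ring.
  rewrite -kq /M. have := ler_wpM2l (exprn_ge0 14 (ltW qp)) hNk. lra.
have [hM2 hM4] := qfacts R C2 q q0 C20 qp qq0 q0c q0h.
have M0 : 0 <= M by rewrite /M; apply: mulr_ge0; [lra|apply: exprn_ge0; apply: ltW].
have gx : forall i j l, inr N i -> inr N j -> inr N l -> vnorm2 (et i.+1 j l) <= M.
  move=> i j l hi hj hl. case: (ltnP i N) => h.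
    by apply: hV => //; rewrite /A4.inr h.
  have -> : i = N by apply/eqP; rewrite eqn_leq h andbT; case/andP: hi.
  by rewrite etN1 // hV.
have gy : forall i j l, inr N i -> inr N j -> inr N l -> vnorm2 (et i j.+1 l) <= M.
  move=> i j l hi hj hl. case: (ltnP j N) => h.
    by apply: hV => //; rewrite /A4.inr h.
  have -> : j = N by apply/eqP; rewrite eqn_leq h andbT; case/andP: hj.
  by rewrite etN2 // hV.
have gz : forall i j l, inr N i -> inr N j -> inr N l -> vnorm2 (et i j l.+1) <= M.
  move=> i j l hi hj hl. case: (ltnP l N) => h.
    by apply: hV => //; rewrite /A4.inr h.
  have -> : l = N by apply/eqP; rewrite eqn_leq h andbT; case/andP: hl.
  by rewrite etN3 // hV.
have mu1 : forall i j l, vnorm2 (mu i j l) = 1 by move=> i j l; exact: (mu_unit N0 hU).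
split.
- move=> i j l hi hj hl. rewrite (clamp_red N0 hX hi hj hl).
  have := hV _ _ _ (clamp_inr N0 i) (clamp_inr N0 j) (clamp_inr N0 l).
  move=> /le_trans /(_ hM4) hb.
  have := P1 (mu1 _ _ _) hb.
  apply: contraTneq => ->.
  rewrite /vnorm (_ : vnorm2 (0 : 'rV[R]_3) = 0) ?sqrtr0; last by rewrite vnorm2E !mxE; ring.
  rewrite -ltNge invr_gt0. lra.
- rewrite (_ : (5 / 4 : R) = 10%:R / 8); last by field.
  rewrite (_ : (1 / 4 : R) = 2%:R / 8); last by field.
  rewrite !(powq R k _ (ltW kp)) -/q.
  rewrite /l2sq /gsum.
  set h3 := hN R N ^+ 3.
  have h30 : 0 <= h3 by apply: exprn_ge0; rewrite /hN invr_ge0 ltW.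
  set al := q ^+ 10. set be := q ^+ 2.
  have al0 : 0 <= al by apply: exprn_ge0; apply: ltW.
  have be0 : 0 <= be by apply: exprn_ge0; apply: ltW.
  have -> : (1 - al) * (h3 * S3 N (fun i j l => vnorm2 (e i j l))) +
      (1 - be) * (h3 * S3 N (fun i j l => vnorm2 (gsub et e i j l)))
    = h3 * S3 N (fun i j l => (1 - al) * vnorm2 (e i j l) + (1 - be) * vnorm2 (gsub et e i j l)).
    by rewrite S3D !S3Z; ring.
  apply: ler_wpM2l => //. apply: S3_le => i j l hi hj hl.
  exact: (P2 (mu1 i j l) (hV _ _ _ hi hj hl) hM4 hM2 al0 be0).
set c := 108 * (1 + eps^-1) * Cs ^+ 2.
have c0 : 0 <= c.
  rewrite /c; apply: mulr_ge0; [apply: mulr_ge0; [lra|]|apply: exprn_ge0; lra].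
  by apply: addr_ge0 => //; rewrite invr_ge0 ltW.
have G3 : forall eta, 0 <= eta -> eta <= 2^-1 -> M <= eta ^+ 2 ->
    gradsq N e <= (1 + eps) / (1 - eta) ^+ 2 * gradsq N et + c * l2sq N et.
  move=> eta he0 he1 hMe.
  set c1 := (1 + eps) / (1 - eta) ^+ 2.
  have c10 : 0 <= c1.
    rewrite /c1; apply: divr_ge0; [lra| apply: exprn_ge0; lra].
  have dir : forall a a' b b' : 'rV[R]_3, vnorm2 a = 1 -> vnorm2 a' = 1 ->
      vnorm2 (a - b) <= M -> vnorm2 (a' - b') <= M -> vnorm2 (a' - a) * N%:R ^+ 2 <= Cs ^+ 2 ->
      N%:R ^+ 2 * vnorm2 ((a' - nrm b') - (a - nrm b)) <=
      c1 * (N%:R ^+ 2 * vnorm2 ((a' - b') - (a - b))) + (1 + eps^-1) * 36 * Cs ^+ 2 * vnorm2 (a - b).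
    move=> a a' b b' ha ha' hab hab' hstep.
    have := P3b ha ha' he0 he1 (le_trans hab hMe) (le_trans hab' hMe) epsp.
    rewrite -/c1 => h.
    have N20 : 0 <= (N%:R : R) ^+ 2 by apply: exprn_ge0; apply: ltW.
    have := ler_wpM2l N20 h.
    have k1 : 0 <= (1 + eps^-1) * 36 * vnorm2 (a - b).
      apply: mulr_ge0; last exact: vnorm2_ge0. apply: mulr_ge0; last by [].
      by apply: addr_ge0 => //; rewrite invr_ge0 ltW.
    have := ler_wpM2l k1 hstep.
    set X1 := vnorm2 ((a' - nrm b') - (a - nrm b)).
    set X2 := vnorm2 ((a' - b') - (a - b)).
    set X3 := vnorm2 (a' - a).
    set X4 := (1 + eps^-1) * 36 * vnorm2 (a - b).
    move=> h1 h2.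
    have e2 : N%:R ^+ 2 * (c1 * X2 + X4 * X3) = c1 * (N%:R ^+ 2 * X2) + X4 * (X3 * N%:R ^+ 2) by ring.
    have e3 : (1 + eps^-1) * 36 * Cs ^+ 2 * vnorm2 (a - b) = X4 * Cs ^+ 2 by rewrite /X4; ring.
    rewrite e3. rewrite e2 in h2. lra.
  rewrite !gradsqE l2sqE.
  set h3 := (N%:R : R)^-1 ^+ 3.
  have h30 : 0 <= h3 by apply: exprn_ge0; rewrite invr_ge0 ltW.
  have -> : c1 * (h3 * S3 N (gtot N et)) + c * (h3 * S3 N (A6.V et))
     = h3 * S3 N (fun i j l => c1 * gtot N et i j l + c * A6.V et i j l).
    rewrite [in RHS]S3D (S3Z N c1 (gtot N et)) (S3Z N c (A6.V et)); ring.
  apply: ler_wpM2l => //. apply: S3_le => i j l hi hj hl.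
  rewrite /gtot !DxE !DyE !DzE.
  have hx := dir _ _ _ _ (mu1 i j l) (mu1 i.+1 j l) (hV _ _ _ hi hj hl) (gx _ _ _ hi hj hl)
     (mu_step_x N0 hW hU j l hi).
  have hy := dir _ _ _ _ (mu1 i j l) (mu1 i j.+1 l) (hV _ _ _ hi hj hl) (gy _ _ _ hi hj hl)
     (mu_step_y N0 hW hU i l hj).
  have hz := dir _ _ _ _ (mu1 i j l) (mu1 i j l.+1) (hV _ _ _ hi hj hl) (gz _ _ _ hi hj hl)
     (mu_step_z N0 hW hU i j hl).
  rewrite /c.
  move: hx hy hz.
  rewrite /e /et /gsub /normalize /nrm /A6.V.
  move=> hx hy hz. lra.
have eth : th * (4 * (1 + delta)) = delta by rewrite /th; field; lra.
have th14 : th <= 4^-1.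
  have : 4 * th * (1 + delta) <= 1 + delta by have := eth; lra.
  rewrite -ler_pdivlMr; last lra.
  rewrite mulfV; last by lra.
  move=> h. have : (4:R)^-1 * 4 = 1 by field. nra.
have h2i : (2:R)^-1 + 2^-1 = 1 by field.
have h4i : (4:R)^-1 + 4^-1 = 2^-1 by field.
have h4p : 0 < (4:R)^-1 by rewrite invr_gt0.
have Cd1 : 0 <= 72 * (1 + eps) * (C2 / kap) ^+ 2 * l2sq N et.
  apply: mulr_ge0 => //. apply: mulr_ge0; last exact: sqr_ge0. lra.
have cl20 : 0 <= c * l2sq N et by apply: mulr_ge0.
case: (lerP M (th ^+ 2)) => hMt.
  have hth : th <= 2^-1 by lra.
  have := G3 th (ltW thp) hth hMt.
  have c1le : (1 + eps) / (1 - th) ^+ 2 <= 1 + delta.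
    have p : 0 < (1 - th) ^+ 2 by apply: exprn_gt0; lra.
    rewrite ler_pdivrMr //.
    have : 0 <= th ^+ 2 by apply: sqr_ge0.
    rewrite /eps. nra.
  have := ler_wpM2r g0 c1le.
  lra.
have i20 : 0 <= (2:R)^-1 by rewrite invr_ge0.
have M2 : M <= (2:R)^-1 ^+ 2 by rewrite (_ : (2:R)^-1 ^+ 2 = 4^-1) //; field.
have := G3 (2^-1) i20 (lexx _) M2.
have -> : (1 + eps) / (1 - 2^-1) ^+ 2 = 4 * (1 + eps) by field.
have hinv := inverse_est N0 etN1 etN2 etN3.
have kk : kap < k.
  have q14 : q ^+ 14 <= q ^+ 8.
    have -> : q ^+ 14 = q ^+ 8 * q ^+ 6 by rewrite -exprD.
    have : q ^+ 6 <= 1 by apply: exprn_ile1; [apply: ltW|lra].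
    move=> h. have := ler_wpM2l (exprn_ge0 8 (ltW qp)) h. by rewrite mulr1.
  have : th ^+ 2 < 80 * C2 * k.
    apply: lt_le_trans hMt _. rewrite /M kq. apply: ler_wpM2l => //. lra.
  rewrite /kap ltr_pdivrMr; last lra.
  lra.
have NC : N%:R <= C2 / kap.
  rewrite ler_pdivlMr //. apply: le_trans hNk. apply: ler_wpM2l; [exact: ltW|exact: ltW].
have N2 : N%:R ^+ 2 <= (C2 / kap) ^+ 2.
  rewrite !expr2. apply: ler_pM => //; exact: ltW.
have := ler_wpM2r l20 N2.
set Nn := N%:R ^+ 2 * l2sq N et.
move=> hN2 hG.
have ep0 : 0 <= 4 * (1 + eps) by lra.
have := ler_wpM2l ep0 hinv.
have : 4 * (1 + eps) * (18 * N%:R ^+ 2 * l2sq N et) = 72 * (1 + eps) * Nn by rewrite /Nn; ring.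
have : 72 * (1 + eps) * ((C2 / kap) ^+ 2 * l2sq N et) = 72 * (1 + eps) * (C2 / kap) ^+ 2 * l2sq N et by ring.
have e72 : 0 <= 72 * (1 + eps) by lra.
have := ler_wpM2l e72 hN2.
have : 0 <= delta * gradsq N et by apply: mulr_ge0 => //; lra.
nra.
Qed.
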